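(* Let $f, g \in \mathrm{Inj}(\Omega)$ each have exactly one infinite cycle, and satisfy $(f)\mathrm{C}_n, (g)\mathrm{C}_n < \aleph_0$ for all $n \in \mathbb{Z}_+$. Then $f \approx_{\mathrm{even}} g$ if and only if $f = hh_1gh_2h^{-1}$ for some $h \in \mathrm{Sym}(\Omega)$ and $h_1, h_2 \in \mathrm{Alt}(\Omega)$.
   Context: $\Omega$ is a countably infinite set; maps are written on the right and composed left to right. $\mathrm{Inj}(\Omega)$ is the monoid of injective maps $\Omega\to\Omega$, $\mathrm{Sym}(\Omega)$ the permutation group, $\mathrm{Alt}(\Omega)$ the group of even permutations moving only finitely many points. For $f\in\mathrm{Inj}(\Omega)$, a cycle of $f$ is a nonempty $\Sigma\subseteq\Omega$ such that (a) for all $\alpha\in\Omega$, $(\alpha)f\in\Sigma$ iff $\alpha\in\Sigma$, and (b) no proper nonempty subset of $\Sigma$ satisfies (a). A forward cycle is an infinite cycle $\Sigma$ with $\Sigma\setminus(\Omega)f\ne\emptyset$; an open cycle is an infinite cycle that is not forward. $(f)\mathrm{C}_n$ ($n\in\mathbb{Z}_+$) is the cardinal number of cycles of cardinality $n$; $(f)\mathrm{C}_{\mathrm{open}}$, $(f)\mathrm{C}_{\mathrm{fwd}}$ the numbers of open and forward cycles. $f\approx_{\mathrm{fin}}g$ means: $(f)\mathrm{C}_{\mathrm{open}}=(g)\mathrm{C}_{\mathrm{open}}$; $(f)\mathrm{C}_{\mathrm{fwd}}=(g)\mathrm{C}_{\mathrm{fwd}}$; $(f)\mathrm{C}_n\ne(g)\mathrm{C}_n$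 for only finitely many $n$; and whenever $(f)\mathrm{C}_n\ne(g)\mathrm{C}_n$, both are finite. $f\approx_{\mathrm{even}} g$ means $f\approx_{\mathrm{fin}}g$ and $\sum_{n\in\mathbb{Z}_+}((f)\mathrm{C}_n-(g)\mathrm{C}_n)$ is an even integer, where a term is $0$ whenever $(f)\mathrm{C}_n=(g)\mathrm{C}_n$ (even if infinite). *)

(* Defs.v *)
From Stdlib Require Import List ZArith Arith Lia.
Import ListNotations.
Set Implicit Arguments.

Section Defs.
Variable Omega : Type.

Definition countably_infinite : Prop :=
  exists e : nat -> Omega, (forall m n, e m = e n -> m = n) /\ (forall y, exists n, e n = y).

Definition injective_map (f : Omega -> Omega) : Prop := forall x y, f x = f y -> x = y.

Definition same_set (S T : Omega -> Prop) : Prop := forall x, S x <-> T x.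

Definition set_finite (S : Omega -> Prop) : Prop := exists l : list Omega, forall x, S x -> In x l.
Definition set_infinite (S : Omega -> Prop) : Prop := ~ set_finite S.

Definition set_card (S : Omega -> Prop) (n : nat) : Prop :=
  exists l : list Omega, NoDup l /\ length l = n /\ forall x, S x <-> In x l.

Definition f_closed (f : Omega -> Omega) (S : Omega -> Prop) : Prop :=
  forall a, S (f a) <-> S a.

Definition is_cycle (f : Omega -> Omega) (S : Omega -> Prop) : Prop :=
  (exists x, S x) /\ f_closed f S /\
  forall T : Omega -> Prop,
    (forall x, T x -> S x) -> (exists x, T x) -> f_closed f T -> same_set T S.

Definition forward_cycle (f : Omega -> Omega) (S : Omega -> Prop) : Prop :=
  set_infinite S /\ exists x, S x /\ ~ exists y, f y = x.

Definition open_cycle (f : Omega -> Omega) (S : Omega -> Prop) : Prop :=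
  set_infinite S /\ ~ forward_cycle f S.

Definition count_exact (f : Omega -> Omega) (P : (Omega -> Prop) -> Prop) (k : nat) : Prop :=
  exists L : list (Omega -> Prop),
    length L = k /\
    (forall S, In S L -> is_cycle f S /\ P S) /\
    ForallOrdPairs (fun S T => ~ same_set S T) L /\
    (forall S, is_cycle f S -> P S -> exists T, In T L /\ same_set S T).

Definition count_finite f P : Prop := exists k, count_exact f P k.

(* Cycles are pairwise disjoint nonempty
   subsets of a countable set, so these cardinals lie in {0,1,2,...,aleph_0};
   hence equality of cardinals is equality of all exact finite counts. *)
Definition count_eq f (Pf : (Omega -> Prop) -> Prop) g (Pg : (Omega -> Prop) -> Prop) : Prop :=
  forall k, count_exact f Pf k <-> count_exact g Pg k.

Definition of_size (n : nat) : (Omega -> Prop) -> Prop := fun S => set_card S n.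

Definition Cn_eq f g (n : nat) : Prop := count_eq f (of_size n) g (of_size n).

Definition approx_fin (f g : Omega -> Omega) : Prop :=
  count_eq f (open_cycle f) g (open_cycle g) /\
  count_eq f (forward_cycle f) g (forward_cycle g) /\
  (exists N, forall n, N < n -> Cn_eq f g n) /\
  (forall n, 1 <= n -> ~ Cn_eq f g n ->
     count_finite f (of_size n) /\ count_finite g (of_size n)).

Definition Cn_diff f g (n : nat) (d : Z) : Prop :=
  (Cn_eq f g n /\ d = 0%Z) \/
  (exists a b, count_exact f (of_size n) a /\ count_exact g (of_size n) b /\
               d = (Z.of_nat a - Z.of_nat b)%Z).

Fixpoint sum_from1 (d : nat -> Z) (N : nat) : Z :=
  match N with 0 => 0%Z | S m => (sum_from1 d m + d (S m))%Z end.

Definition approx_even (f g : Omega -> Omega) : Prop :=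
  approx_fin f g /\
  exists (N : nat) (d : nat -> Z),
    (forall n, N < n -> Cn_eq f g n) /\
    (forall n, 1 <= n <= N -> Cn_diff f g n (d n)) /\
    Z.Even (sum_from1 d N).

Definition is_sym (h hinv : Omega -> Omega) : Prop :=
  (forall x, hinv (h x) = x) /\ (forall x, h (hinv x) = x).

Definition is_transposition (t : Omega -> Omega) : Prop :=
  exists a b, a <> b /\ t a = b /\ t b = a /\ forall x, x <> a -> x <> b -> t x = x.

(* composition of a list of maps, left to right: x (t1 t2 ... tk) *)
Fixpoint compose_lr (ts : list (Omega -> Omega)) (x : Omega) : Omega :=
  match ts with [] => x | t :: ts' => compose_lr ts' (t x) end.

(* Alt(Omega): finitary even permutations = products of an even number of
   transpositions *)
Definition is_alt (p : Omega -> Omega) : Prop :=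
  exists ts : list (Omega -> Omega),
    Nat.Even (length ts) /\ (forall t, In t ts -> is_transposition t) /\
    forall x, p x = compose_lr ts x.

Definition one_infinite_cycle (f : Omega -> Omega) : Prop :=
  exists S, is_cycle f S /\ set_infinite S /\
    forall T, is_cycle f T -> set_infinite T -> same_set S T.

End Defs.

(* Main.v *)
Require Import Defs.
From Stdlib Require Import List ZArith Arith Lia Classical ClassicalEpsilon.
Import ListNotations.

Section Gen.
Context {Omega : Type}.
Implicit Types (f g F G : Omega -> Omega) (x y z a b : Omega) (S T : Omega -> Prop).

Definition xm (P:Prop) : {P}+{~P} := excluded_middle_informative P.

Fixpoint it f (n : nat) x : Omega :=
  match n with 0 => x | S m => f (it f m x) end.

Lemma it_add f m n x : it f (m + n) x = it f m (it f n x).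
Proof. induction m; simpl; congruence. Qed.
Lemma it_comm f n x : it f n (f x) = f (it f n x).
Proof. induction n; simpl; congruence. Qed.
Lemma it_Sr f n x : it f (S n) x = it f n (f x).
Proof. simpl. rewrite it_comm. auto. Qed.
Lemma it_swap f m n x : it f m (it f n x) = it f n (it f m x).
Proof. rewrite <- !it_add. f_equal. lia. Qed.
Lemma it_inj f (Hf: injective_map f) n x y : it f n x = it f n y -> x = y.
Proof. induction n; simpl; auto. Qed.

Definition conn f x y := exists m n, it f m x = it f n y.

Lemma conn_refl f x : conn f x x. Proof. exists 0, 0; auto. Qed.
Lemma conn_sym f x y : conn f x y -> conn f y x.
Proof. intros [m [n H]]; exists n, m; auto. Qed.
Lemma conn_trans f x y z : conn f x y -> conn f y z -> conn f x z.
Proof.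
  intros [m [n H]] [p [q H']]. exists (p + m), (n + q).
  rewrite !it_add, H, it_swap, H'. auto.
Qed.
Lemma conn_it f x n : conn f x (it f n x).
Proof. exists n, 0; auto. Qed.
Lemma conn_f f x y : conn f x (f y) <-> conn f x y.
Proof.
  split; intros [m [n H]].
  - exists m, (S n). simpl. rewrite <- it_comm. auto.
  - exists (S m), n. simpl. rewrite H, it_comm. auto.
Qed.

Lemma closed_it f T y : f_closed f T -> forall n, T (it f n y) <-> T y.
Proof. intros HT n; induction n; simpl. tauto. rewrite (HT (it f n y)); auto. Qed.

Lemma closed_conn f T x y : f_closed f T -> conn f x y -> T x -> T y.
Proof.
  intros HT [m [n H]] Hx. apply (closed_it _ _ _ HT n). rewrite <- H.
  apply (closed_it _ _ _ HT m). auto.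
Qed.

Lemma cycle_conn f x : is_cycle f (conn f x).
Proof.
  split; [exists x; apply conn_refl|split].
  - intro a. apply conn_f.
  - intros T HTS [y Hy] HT z. split; auto. intro Hz.
    apply (closed_conn _ _ y z HT); auto.
    apply conn_trans with x; auto. apply conn_sym; auto.
Qed.

Lemma cycle_same f S x : is_cycle f S -> S x -> same_set S (conn f x).
Proof.
  intros [_ [HS Hmin]] Hx.
  assert (same_set (conn f x) S).
  { apply Hmin. intros z Hz; apply (closed_conn _ _ x z HS); auto.
    exists x; apply conn_refl. intro a; apply conn_f. }
  intro z; specialize (H z); tauto.
Qed.

Lemma same_sym S T : same_set S T -> same_set T S.
Proof. intros H z; specialize (H z); tauto. Qed.
Lemma same_trans S T (U : Omega -> Prop) : same_set S T -> same_set T U -> same_set S U.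
Proof. intros H H' z; specialize (H z); specialize (H' z); tauto. Qed.

Lemma cycle_ext f S T : same_set S T -> is_cycle f S -> is_cycle f T.
Proof.
  intros HST [[x Hx] [HS Hmin]]. split; [exists x; apply HST; auto|split].
  - intro a; rewrite <- (HST (f a)), <- (HST a); apply HS.
  - intros U HU Hne HUc. apply same_trans with S. apply Hmin; auto.
    intros z Hz; apply HST; auto. auto.
Qed.

Lemma conn_same f x y : conn f x y -> same_set (conn f x) (conn f y).
Proof.
  intros H z; split; intro.
  apply conn_trans with x; auto; apply conn_sym; auto.
  apply conn_trans with y; auto.
Qed.

Lemma nat_min (P : nat -> Prop) n : P n -> exists m, P m /\ forall k, k < m -> ~ P k.
Proof.
  revert P. induction n as [n IH] using lt_wf_ind. intros P Hn.
  destruct (classic (exists k, k < n /\ P k)) as [[k [Hk HPk]]|Hno].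
  - apply (IH k Hk P HPk).
  - exists n; split; auto. intros k Hk HPk; apply Hno; eauto.
Qed.

Definition per f x p := 1 <= p /\ it f p x = x /\ forall d, 1 <= d < p -> it f d x <> x.

Lemma it_mul f x p q : it f p x = x -> it f (q * p) x = x.
Proof. intro H; induction q; simpl; auto. rewrite it_add, IHq, H. auto. Qed.

Lemma per_mod f x p n : per f x p -> it f n x = it f (n mod p) x.
Proof.
  intros [Hp [Hx _]]. rewrite (Nat.div_mod_eq n p) at 1.
  rewrite Nat.add_comm, it_add, Nat.mul_comm, it_mul; auto.
Qed.

Section Inj.
Variable f : Omega -> Omega.
Hypothesis Hf : injective_map f.

Lemma per_conn_iff x p y : per f x p -> (conn f x y <-> exists i, i < p /\ y = it f i x).
Proof.
  intros Hp. split.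
  - intros [m [n H]].
    assert (E: it f (m + n * p) x = it f m x).
    { rewrite it_add, it_mul; auto. apply Hp. }
    assert (E2: m + n * p = n + (m + n * p - n)).
    { destruct Hp as [Hp1 _]. assert (n <= n * p) by nia. lia. }
    rewrite E2, it_add, H in E. apply it_inj in E; auto.
    exists ((m + n * p - n) mod p). split. apply Nat.mod_upper_bound. destruct Hp; lia.
    rewrite <- E. apply per_mod; auto.
  - intros [i [_ ->]]. apply conn_it.
Qed.

Lemma per_card x p : per f x p -> set_card (conn f x) p.
Proof.
  intros Hp. exists (map (fun i => it f i x) (seq 0 p)). split; [|split].
  - apply NoDup_map_NoDup_ForallPairs; [|apply seq_NoDup].
    intros i j Hi Hj E. apply in_seq in Hi, Hj.
    destruct (Nat.lt_total i j) as [Hl|[He|Hl]]; auto; exfalso.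
    + replace j with ((j - i) + i) in E by lia. rewrite it_add, it_swap in E.
      apply it_inj in E; auto. symmetry in E. destruct Hp as [_ [_ Hm]]. apply (Hm (j - i)); auto; lia.
    + replace i with ((i - j) + j) in E by lia. rewrite it_add, it_swap in E.
      apply it_inj in E; auto. destruct Hp as [_ [_ Hm]]. apply (Hm (i - j)); auto; lia.
  - rewrite length_map, length_seq; auto.
  - intro y. rewrite (per_conn_iff x p y Hp). rewrite in_map_iff.
    split; intros [i [H1 H2]]; exists i; split; auto.
    apply in_seq; lia. apply in_seq in H2; lia.
Qed.

Lemma pigeon x (l : list Omega) : (forall i, i <= length l -> In (it f i x) l) ->
  exists i j, i < j <= length l /\ it f i x = it f j x.
Proof.
  intros H. apply NNPP. intro Hno.
  assert (ND: NoDup (map (fun i => it f i x) (seq 0 (S (length l))))).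
  { apply NoDup_map_NoDup_ForallPairs; [|apply seq_NoDup].
    intros i j Hi Hj E. apply in_seq in Hi, Hj.
    destruct (Nat.lt_total i j) as [Hl|[He|Hl]]; auto; exfalso; apply Hno.
    exists i, j; split; auto; lia. exists j, i; split; auto; lia. }
  apply NoDup_incl_length with (l' := l) in ND.
  rewrite length_map, length_seq in ND. lia.
  intros y Hy. apply in_map_iff in Hy. destruct Hy as [i [<- Hi]]. apply in_seq in Hi.
  apply H; lia.
Qed.

Lemma finite_per x : set_finite (conn f x) -> exists p, per f x p.
Proof.
  intros [l Hl]. destruct (pigeon x l) as [i [j [Hij E]]].
  intros i _; apply Hl, conn_it.
  assert (P: 1 <= j - i /\ it f (j - i) x = x).
  { split. lia. replace j with ((j - i) + i) in E by lia. rewrite it_add, it_swap in E.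
    apply it_inj in E; auto. }
  destruct (nat_min (fun d => 1 <= d /\ it f d x = x) _ P) as [m [[H1 H2] H3]].
  exists m; split; auto; split; auto. intros d Hd E'. apply (H3 d); [lia|split;[lia|auto]].
Qed.

Lemma per_finite x p : per f x p -> set_finite (conn f x).
Proof. intros Hp. destruct (per_card _ _ Hp) as [l [_ [_ H]]]. exists l; intros; apply H; auto. Qed.

Lemma per_unique x p q : per f x p -> per f x q -> p = q.
Proof.
  intros [Hp1 [Hp2 Hp3]] [Hq1 [Hq2 Hq3]].
  destruct (Nat.lt_total p q) as [Hl|[He|Hl]]; auto; exfalso.
  apply (Hq3 p); auto. apply (Hp3 q); auto.
Qed.

Lemma per_div x p d : per f x p -> (it f d x = x <-> d mod p = 0).
Proof.
  intros Hp. rewrite (per_mod f x p d Hp). split; intro H.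
  - destruct (Nat.eq_dec (d mod p) 0); auto. exfalso.
    destruct Hp as [H1 [_ H3]]. apply (H3 (d mod p)); auto.
    split. lia. apply Nat.mod_upper_bound; lia.
  - rewrite H; auto.
Qed.

Lemma per_conn x y p : per f x p -> conn f x y -> per f y p.
Proof.
  intros Hp Hc. apply per_conn_iff with (y := y) in Hp as H'.
  destruct (proj1 H' Hc) as [i [Hi ->]].
  destruct Hp as [H1 [H2 H3]]. split; auto; split.
  rewrite it_swap, H2; auto.
  intros d Hd E. rewrite it_swap in E. apply it_inj in E; auto. apply (H3 d); auto.
Qed.

Lemma card_unique S n m : set_card S n -> set_card S m -> n = m.
Proof.
  intros [l [Hl1 [Hl2 Hl3]]] [l' [Hl1' [Hl2' Hl3']]].
  assert (length l <= length l'). { apply NoDup_incl_length; auto. intros z Hz. apply Hl3', Hl3; auto. }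
  assert (length l' <= length l). { apply NoDup_incl_length; auto. intros z Hz. apply Hl3, Hl3'; auto. }
  lia.
Qed.

Lemma card_same S T n : same_set S T -> set_card S n -> set_card T n.
Proof. intros H [l [A [B C]]]; exists l; split; auto; split; auto. intro z; rewrite <- (H z); auto. Qed.

Lemma card_per x n : set_card (conn f x) n -> per f x n.
Proof.
  intros Hc. destruct (finite_per x) as [p Hp].
  destruct Hc as [l [_ [_ H]]]; exists l; intros; apply H; auto.
  rewrite (card_unique _ _ _ Hc (per_card _ _ Hp)); auto.
Qed.

Lemma infinite_iff x : set_infinite (conn f x) <-> ~ exists p, per f x p.
Proof.
  split.
  - intros H [p Hp]. apply H. eapply per_finite; eauto.
  - intros H Hfin. apply H, finite_per; auto.
Qed.

Lemma per_image x p z : per f x p -> conn f x z -> exists w, f w = z.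
Proof.
  intros Hp Hc. apply (per_conn x z p Hp) in Hc. destruct Hc as [H1 [H2 _]].
  exists (it f (p - 1) z). replace p with (S (p - 1)) in H2 by lia. simpl in H2; auto.
Qed.

End Inj.
End Gen.

Section Gen2.
Context {Omega : Type}.
Implicit Types (f g F G : Omega -> Omega) (x y z a b : Omega) (S T : Omega -> Prop).

Definition ext_P (P : (Omega -> Prop) -> Prop) := forall S T, same_set S T -> P S -> P T.

Lemma fop_len (L1 L2 : list (Omega->Prop)) :
  ForallOrdPairs (fun S T => ~ same_set S T) L1 ->
  (forall S, In S L1 -> exists T, In T L2 /\ same_set S T) ->
  length L1 <= length L2.
Proof.
  revert L2. induction L1 as [|S L1 IH]; intros L2 HF HM; simpl. lia.
  inversion HF as [|? ? H1 H2]; subst.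
  destruct (HM S (or_introl eq_refl)) as [T [HT HST]].
  apply in_split in HT. destruct HT as [A [B ->]].
  assert (length L1 <= length (A ++ B)).
  { apply IH; auto. intros S' HS'. destruct (HM S' (or_intror HS')) as [T' [HT' HST']].
    exists T'. split; auto. apply in_app_or in HT'. destruct HT' as [HA|[HE|HB]].
    apply in_or_app; auto. 2: apply in_or_app; auto.
    exfalso. subst T'. rewrite Forall_forall in H1. apply (H1 S' HS').
    apply same_trans with T; auto. apply same_sym; auto. }
  rewrite length_app in *; simpl; lia.
Qed.

Lemma ce_unique f P k k' : count_exact f P k -> count_exact f P k' -> k = k'.
Proof.
  intros [L1 [A1 [B1 [C1 D1]]]] [L2 [A2 [B2 [C2 D2]]]]. subst.
  assert (length L1 <= length L2).
  { apply fop_len; auto. intros S HS. destruct (B1 S HS). apply D2; auto. }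
  assert (length L2 <= length L1).
  { apply fop_len; auto. intros S HS. destruct (B2 S HS). apply D1; auto. }
  lia.
Qed.

Definition qb (Q : (Omega -> Prop) -> Prop) S : bool := if xm (Q S) then true else false.

Lemma fop_filter (R : (Omega->Prop) -> (Omega->Prop) -> Prop) p l :
  ForallOrdPairs R l -> ForallOrdPairs R (filter p l).
Proof.
  induction l; intros H; simpl; auto. inversion H; subst.
  destruct (p a); auto. constructor; auto.
  rewrite Forall_forall in *. intros x Hx. apply filter_In in Hx. apply H2; tauto.
Qed.

Lemma fop_app (R : (Omega->Prop) -> (Omega->Prop) -> Prop) l1 l2 :
  ForallOrdPairs R l1 -> ForallOrdPairs R l2 -> (forall S T, In S l1 -> In T l2 -> R S T) ->
  ForallOrdPairs R (l1 ++ l2).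
Proof.
  induction l1; intros H1 H2 H3; simpl; auto. inversion H1; subst.
  constructor. rewrite Forall_forall in *. intros S Hx. apply in_app_or in Hx.
  destruct Hx; auto. apply H3; simpl; auto.
  apply IHl1; auto. intros; apply H3; simpl; auto.
Qed.

Lemma filter_len_split (p : (Omega -> Prop) -> bool) l :
  length (filter p l) + length (filter (fun S => negb (p S)) l) = length l.
Proof. induction l; simpl; auto. destruct (p a); simpl; lia. Qed.

Lemma ce_split f P Q k : ext_P Q -> count_exact f P k ->
  exists k1 k2, count_exact f (fun S => P S /\ Q S) k1 /\
                count_exact f (fun S => P S /\ ~ Q S) k2 /\ k = k1 + k2.
Proof.
  intros HQ [L [A [B [C D]]]].
  exists (length (filter (qb Q) L)), (length (filter (fun S => negb (qb Q S)) L)).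
  split; [|split].
  - exists (filter (qb Q) L). split; auto. split; [|split].
    + intros S HS. apply filter_In in HS. destruct HS as [H1 H2]. unfold qb in H2.
      destruct (xm (Q S)); try discriminate. destruct (B S H1); auto.
    + apply fop_filter; auto.
    + intros S HS [HP HQS]. destruct (D S HS HP) as [T [HT HST]]. exists T; split; auto.
      apply filter_In; split; auto. unfold qb. destruct (xm (Q T)); auto. exfalso; eauto.
  - exists (filter (fun S => negb (qb Q S)) L). split; auto. split; [|split].
    + intros S HS. apply filter_In in HS. destruct HS as [H1 H2]. unfold qb in H2.
      destruct (xm (Q S)); try discriminate. destruct (B S H1); auto.
    + apply fop_filter; auto.
    + intros S HS [HP HQS]. destruct (D S HS HP) as [T [HT HST]]. exists T; split; auto.
      apply filter_In; split; auto. unfold qb. destruct (xm (Q T)); auto. exfalso.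
      apply HQS. apply (HQ T S); auto. apply same_sym; auto.
  - subst. rewrite filter_len_split; auto.
Qed.

Lemma ce_union f P Q k1 k2 : ext_P Q ->
  count_exact f (fun S => P S /\ Q S) k1 -> count_exact f (fun S => P S /\ ~ Q S) k2 ->
  count_exact f P (k1 + k2).
Proof.
  intros HQ [L1 [A1 [B1 [C1 D1]]]] [L2 [A2 [B2 [C2 D2]]]].
  exists (L1 ++ L2). split; [rewrite length_app; lia|split;[|split]].
  - intros S HS. apply in_app_or in HS. destruct HS as [H|H];
      [destruct (B1 S H) as [? [? ?]]|destruct (B2 S H) as [? [? ?]]]; auto.
  - apply fop_app; auto. intros S T HS HT HST.
    destruct (B1 S HS) as [_ [_ H1]]. destruct (B2 T HT) as [_ [_ H2]]. apply H2. eapply HQ; eauto.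
  - intros S HS HP. destruct (classic (Q S)) as [H|H].
    + destruct (D1 S HS (conj HP H)) as [T [? ?]]; exists T; split; auto; apply in_or_app; auto.
    + destruct (D2 S HS (conj HP H)) as [T [? ?]]; exists T; split; auto; apply in_or_app; auto.
Qed.

Lemma ce_ext f P P' k : (forall S, is_cycle f S -> (P S <-> P' S)) ->
  count_exact f P k -> count_exact f P' k.
Proof.
  intros HP [L [A [B [C D]]]]. exists L. split; auto; split; [|split]; auto.
  - intros S HS. destruct (B S HS). split; auto. apply HP; auto.
  - intros S HS HP'. apply D; auto. apply HP; auto.
Qed.

Lemma ce_transfer f g P k : (forall S, P S -> (is_cycle f S <-> is_cycle g S)) ->
  count_exact f P k -> count_exact g P k.
Proof.
  intros HP [L [A [B [C D]]]]. exists L. split; auto; split; [|split]; auto.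
  - intros S HS. destruct (B S HS) as [H1 H2]. split; auto. apply (HP S H2); auto.
  - intros S HS HP'. apply D; auto. apply (HP S HP'); auto.
Qed.

Lemma ce_zero f P : (forall S, is_cycle f S -> ~ P S) -> count_exact f P 0.
Proof.
  intros H. exists []. split; auto; split; [|split]. intros S []. constructor.
  intros S HS HP; exfalso; eapply H; eauto.
Qed.

Lemma ce_one f P S0 : is_cycle f S0 -> P S0 ->
  (forall S, is_cycle f S -> P S -> same_set S S0) -> count_exact f P 1.
Proof.
  intros H1 H2 H3. exists [S0]. split; auto; split; [|split].
  intros S [<-|[]]; auto. constructor; constructor.
  intros S HS HP; exists S0; split; simpl; auto.
Qed.

Section Conj.
Variables (f g phi psi : Omega -> Omega).
Hypothesis Hpp : forall x, psi (phi x) = x.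
Hypothesis Hpp' : forall y, phi (psi y) = y.
Hypothesis Hc : forall x, phi (f x) = g (phi x).

Definition img S : Omega -> Prop := fun y => S (psi y).
Definition pre T : Omega -> Prop := fun x => T (phi x).

Lemma conj_closed S : f_closed f S -> f_closed g (img S).
Proof.
  intros H y. unfold img. rewrite <- (Hpp' y) at 1. rewrite <- Hc, Hpp. apply H.
Qed.
Lemma conj_closed' T : f_closed g T -> f_closed f (pre T).
Proof. intros H x. unfold pre. rewrite Hc. apply H. Qed.

Lemma conj_cycle S : is_cycle f S -> is_cycle g (img S).
Proof.
  intros [[x Hx] [HS Hmin]]. split; [exists (phi x); unfold img; rewrite Hpp; auto|split].
  - apply conj_closed; auto.
  - intros T HT [y Hy] HTc. assert (E: same_set (pre T) S).
    { apply Hmin. intros z Hz. specialize (HT _ Hz). unfold img in HT; rewrite Hpp in HT; auto.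
      exists (psi y); unfold pre; rewrite Hpp'; auto. apply conj_closed'; auto. }
    intro z. unfold img. rewrite <- (E (psi z)). unfold pre. rewrite Hpp'. tauto.
Qed.

Lemma conj_cycle' T : is_cycle g T -> is_cycle f (pre T).
Proof.
  intros [[y Hy] [HT Hmin]]. split; [exists (psi y); unfold pre; rewrite Hpp'; auto|split].
  - apply conj_closed'; auto.
  - intros S HS [x Hx] HSc. assert (E: same_set (img S) T).
    { apply Hmin. intros z Hz. specialize (HS _ Hz). unfold pre in HS; rewrite Hpp' in HS; auto.
      exists (phi x); unfold img; rewrite Hpp; auto. apply conj_closed; auto. }
    intro z. unfold pre. rewrite <- (E (phi z)). unfold img. rewrite Hpp. tauto.
Qed.

Lemma conj_card S n : set_card S n -> set_card (img S) n.
Proof.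
  intros [l [A [B C]]]. exists (map phi l). split; [|split].
  - apply NoDup_map_NoDup_ForallPairs; auto. intros x y _ _ E.
    rewrite <- (Hpp x), <- (Hpp y), E; auto.
  - rewrite length_map; auto.
  - intro y. unfold img. rewrite (C (psi y)), in_map_iff. split.
    intro; exists (psi y); auto. intros [x [<- Hx]]. rewrite Hpp; auto.
Qed.

Lemma conj_card' T n : set_card T n -> set_card (pre T) n.
Proof.
  intros [l [A [B C]]]. exists (map psi l). split; [|split].
  - apply NoDup_map_NoDup_ForallPairs; auto. intros x y _ _ E.
    rewrite <- (Hpp' x), <- (Hpp' y), E; auto.
  - rewrite length_map; auto.
  - intro x. unfold pre. rewrite (C (phi x)), in_map_iff. split.
    intro; exists (phi x); auto. intros [y [<- Hy]]. rewrite Hpp'; auto.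
Qed.

Lemma conj_ce n k : count_exact f (of_size n) k -> count_exact g (of_size n) k.
Proof.
  intros [L [A [B [C D]]]]. exists (map img L). split; [rewrite length_map; auto|split;[|split]].
  - intros T HT. apply in_map_iff in HT. destruct HT as [S [<- HS]]. destruct (B S HS).
    split. apply conj_cycle; auto. apply conj_card; auto.
  - clear -C Hpp Hpp'. induction C; simpl; constructor; auto.
    rewrite Forall_forall in *. intros T HT HE. apply in_map_iff in HT. destruct HT as [S [<- HS]].
    apply (H S HS). intro z. rewrite <- (Hpp z). apply (HE (phi z)).
  - intros T HT HTs. destruct (D (pre T)) as [S [HS HSe]]. apply conj_cycle'; auto.
    apply conj_card'; auto. exists (img S). split. apply in_map; auto.
    intro y. unfold img. rewrite <- (HSe (psi y)). unfold pre. rewrite Hpp'. tauto.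
Qed.

End Conj.

Lemma conj_ce_iff f g phi psi n k :
  (forall x, psi (phi x) = x) -> (forall y, phi (psi y) = y) ->
  (forall x, phi (f x) = g (phi x)) ->
  (count_exact f (of_size n) k <-> count_exact g (of_size n) k).
Proof.
  intros H1 H2 H3. split. apply conj_ce with phi psi; auto.
  apply conj_ce with psi phi; auto. intro y. rewrite <- (H2 y) at 1. rewrite <- H3, !H1; auto.
Qed.

Definition surj f := forall y, exists x, f x = y.

Definition OIC f := (exists x, ~ exists p, per f x p) /\
  (forall x y, ~ (exists p, per f x p) -> ~ (exists p, per f y p) -> conn f x y).

Lemma oic_iff f : injective_map f -> (one_infinite_cycle f <-> OIC f).
Proof.
  intros Hf. split.
  - intros [I [HI [Hinf Hu]]]. destruct HI as [[x Hx] HI'].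
    assert (E: same_set I (conn f x)). apply cycle_same; auto. split; auto. exists x; auto.
    split.
    + exists x. apply infinite_iff; auto. intros [l Hl]. apply Hinf. exists l. intros z Hz; apply Hl, E; auto.
    + intros y z Hy Hz.
      assert (Ey : same_set I (conn f y)). { apply Hu. apply cycle_conn. apply infinite_iff; auto. }
      assert (Ez : same_set I (conn f z)). { apply Hu. apply cycle_conn. apply infinite_iff; auto. }
      apply (Ey z), (Ez z), conn_refl.
  - intros [[x0 Hx0] Hc]. exists (conn f x0). split. apply cycle_conn. split.
    apply infinite_iff; auto. intros T HT HTi. destruct HT as [[z Hz] HT'].
    assert (E: same_set T (conn f z)). apply cycle_same; auto. split; auto. exists z; auto.
    assert (Hzn : ~ exists p, per f z p).
    { apply infinite_iff; auto. intros [l Hl]. apply HTi. exists l. intros w Hw; apply Hl, E; auto. }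
    apply same_trans with (conn f z). apply conn_same; auto. apply same_sym; auto.
Qed.

Lemma forward_ext f S T : same_set S T -> forward_cycle f S -> forward_cycle f T.
Proof.
  intros E [Hi [x [Hx Hn]]]. split. intros [l Hl]. apply Hi. exists l; intros; apply Hl, E; auto.
  exists x; split; auto. apply E; auto.
Qed.

Lemma inf_ext S T : same_set S T -> set_infinite S -> set_infinite T.
Proof. intros E Hi [l Hl]. apply Hi. exists l; intros; apply Hl, E; auto. Qed.

Lemma surj_counts f : injective_map f -> OIC f ->
  (surj f -> count_exact f (open_cycle f) 1 /\ count_exact f (forward_cycle f) 0) /\
  (~ surj f -> count_exact f (open_cycle f) 0 /\ count_exact f (forward_cycle f) 1).
Proof.
  intros Hf [[x0 Hx0] Hc]. split; intro Hs; split.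
  - apply ce_one with (conn f x0). apply cycle_conn. split. apply infinite_iff; auto.
    intros [Hi [x [_ Hx]]]. apply Hx, Hs.
    intros S HS [HSi _]. destruct HS as [[z Hz] HS']. assert (E: same_set S (conn f z)).
    apply cycle_same; auto. split; auto. exists z; auto.
    apply same_trans with (conn f z); auto. apply conn_same. apply Hc; auto.
    apply infinite_iff; auto. eapply inf_ext; eauto.
  - apply ce_zero. intros S _ [_ [x [_ Hx]]]. apply Hx, Hs.
  - apply ce_zero. intros S HS [HSi HSf]. apply Hs. intro y. apply NNPP. intro Hy.
    assert (Hyn: ~ exists p, per f y p). { intros [p Hp]. apply Hy. apply (per_image f Hf y p y Hp (conn_refl _ _)). }
    destruct HS as [[z Hz] HS']. assert (E: same_set S (conn f z)).
    apply cycle_same; auto. split; auto. exists z; auto.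
    assert (Hzn : ~ exists p, per f z p). apply infinite_iff; auto. eapply inf_ext; eauto.
    apply HSf. apply forward_ext with (conn f z). apply same_sym; auto.
    split. apply infinite_iff; auto. exists y. split. apply Hc; auto. auto.
  - assert (Hs': exists y, ~ exists x, f x = y).
    { apply NNPP. intro H. apply Hs. intro y. apply NNPP. intro Hy. apply H. exists y. exact Hy. }
    destruct Hs' as [y Hy].
    assert (Hyn: ~ exists p, per f y p). { intros [p Hp]. apply Hy. apply (per_image f Hf y p y Hp (conn_refl _ _)). }
    apply ce_one with (conn f y). apply cycle_conn. split. apply infinite_iff; auto.
    exists y; split; [apply conn_refl|auto].
    intros S HS [HSi _]. destruct HS as [[z Hz] HS']. assert (E: same_set S (conn f z)).
    apply cycle_same; auto. split; auto. exists z; auto.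
    apply same_trans with (conn f z); auto. apply conn_same. apply Hc; auto.
    apply infinite_iff; auto. eapply inf_ext; eauto.
Qed.

End Gen2.

Section Basic.
Context {Omega : Type}.
Implicit Types (x y z : Omega) (S T : Omega -> Prop).
Variables (F G t : Omega -> Omega) (a b : Omega).
Hypothesis Hab : a <> b.
Hypothesis Hta : t a = b.
Hypothesis Htb : t b = a.
Hypothesis Hto : forall x, x <> a -> x <> b -> t x = x.
Hypothesis HG : forall x, G x = t (F x).

Lemma t_inv x : t (t x) = x.
Proof.
  destruct (classic (x = a)) as [->|Ha]. rewrite Hta, Htb; auto.
  destruct (classic (x = b)) as [->|Hb]. rewrite Htb, Hta; auto.
  rewrite (Hto x Ha Hb). apply (Hto x Ha Hb).
Qed.

Lemma t_pres S : ~ S a -> ~ S b -> forall z, S (t z) <-> S z.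
Proof.
  intros Ha Hb z.
  destruct (classic (z = a)) as [->|Hza]. rewrite Hta; tauto.
  destruct (classic (z = b)) as [->|Hzb]. rewrite Htb; tauto.
  rewrite Hto; tauto.
Qed.

Lemma untouched S : is_cycle F S -> ~ S a -> ~ S b -> is_cycle G S.
Proof.
  intros [Hne [HS Hmin]] Ha Hb. split; auto. split.
  - intro x. rewrite HG, (t_pres S Ha Hb). apply HS.
  - intros T HT Hne' HTc. apply Hmin; auto.
    assert (Ta : ~ T a) by (intro; apply Ha; auto).
    assert (Tb : ~ T b) by (intro; apply Hb; auto).
    intro x. rewrite <- (t_pres T Ta Tb (F x)), <- HG. apply HTc.
Qed.

Lemma merge p : per F a p -> ~ conn F a b -> conn G a b.
Proof.
  intros [Hp1 [Hp2 Hp3]] Hn.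
  assert (E: forall i, i < p -> it G i a = it F i a).
  { induction i; intros Hi; simpl; auto. rewrite HG, IHi by lia.
    apply Hto. change (F (it F i a)) with (it F (S i) a). apply Hp3; lia.
    intro E. apply Hn. exists (S i), 0. auto. }
  exists p, 0. simpl. replace p with (S (p - 1)) by lia. simpl.
  rewrite HG, E by lia. change (F (it F (p - 1) a)) with (it F (S (p - 1)) a).
  replace (S (p - 1)) with p by lia. rewrite Hp2; auto.
Qed.

End Basic.

Section Split.
Context {Omega : Type}.
Implicit Types (x y z : Omega) (S T : Omega -> Prop).
Variables (F G t : Omega -> Omega) (a b : Omega).
Hypothesis HF : injective_map F.
Hypothesis Hab : a <> b.
Hypothesis Hta : t a = b.
Hypothesis Htb : t b = a.
Hypothesis Hto : forall x, x <> a -> x <> b -> t x = x.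
Hypothesis HG : forall x, G x = t (F x).

Lemma split_core k : 1 <= k -> it F k a = b -> (forall j, 1 <= j < k -> it F j a <> b) ->
  per G a k /\ ~ conn G a b.
Proof.
  intros Hk Hb Hmin.
  assert (Na : forall j, 1 <= j < k -> it F j a <> a).
  { intros j Hj E. apply (Hmin (k - j)). lia. rewrite <- Hb.
    replace k with ((k - j) + j) at 2 by lia. rewrite it_add, E; auto. }
  assert (E: forall i, i < k -> it G i a = it F i a).
  { induction i; intros Hi; simpl; auto. rewrite HG, IHi by lia.
    apply Hto. change (F (it F i a)) with (it F (S i) a). apply Na; lia.
    change (F (it F i a)) with (it F (S i) a). apply Hmin; lia. }
  assert (Gk : it G k a = a).
  { replace k with (S (k - 1)) by lia. simpl. rewrite HG, E by lia.
    change (F (it F (k - 1) a)) with (it F (S (k - 1)) a).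
    replace (S (k - 1)) with k by lia. rewrite Hb; auto. }
  assert (HGi : injective_map G).
  { intros x y Hxy. rewrite !HG in Hxy. apply HF.
    rewrite <- (t_inv t a b Hta Htb Hto (F x)), Hxy, (t_inv t a b Hta Htb Hto (F y)); auto. }
  assert (Hp : per G a k).
  { split; auto; split; auto. intros d Hd. rewrite E by lia. apply Na; auto. }
  split; auto. intro Hc. apply (per_conn_iff G HGi a k b Hp) in Hc.
  destruct Hc as [i [Hi Hbi]]. rewrite E in Hbi by auto.
  destruct i. simpl in Hbi. auto. apply (Hmin (S i)). lia. auto.
Qed.

End Split.

Section Touch.
Context {Omega : Type}.
Implicit Types (F G : Omega -> Omega) (x y z a b : Omega) (S T : Omega -> Prop).

Definition psize F x : nat :=
  match xm (exists p, per F x p) with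
  | left H => proj1_sig (constructive_indefinite_description _ H)
  | right _ => 0 end.

Lemma psize_per F x p : injective_map F -> per F x p -> psize F x = p.
Proof.
  intros HF Hp. unfold psize. destruct (xm _) as [H|H]; [|exfalso; eauto].
  destruct (constructive_indefinite_description _ H) as [q Hq]; simpl.
  eapply per_unique; eauto.
Qed.

Lemma psize_np F x : ~ (exists p, per F x p) -> psize F x = 0.
Proof. intros H. unfold psize. destruct (xm _); auto. contradiction. Qed.

Lemma psize_pos F x : 1 <= psize F x -> per F x (psize F x).
Proof.
  unfold psize. destruct (xm _) as [H|H]; [|simpl; lia].
  destruct (constructive_indefinite_description _ H) as [q Hq]; simpl; auto.
Qed.

Definition occ (l : list nat) n := count_occ Nat.eq_dec l n.
Definition tl F (xs : list Omega) := filter (fun p => 1 <=? p) (map (psize F) xs).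

Lemma ce_single F x n : injective_map F -> 1 <= n ->
  count_exact F (fun S => of_size n S /\ S x) (if Nat.eq_dec (psize F x) n then 1 else 0).
Proof.
  intros HF Hn. destruct (Nat.eq_dec (psize F x) n) as [E|E].
  - assert (Hp : per F x n). { rewrite <- E. apply psize_pos; lia. }
    apply ce_one with (conn F x). apply cycle_conn. split. apply per_card; auto. apply conn_refl.
    intros S HS [_ HSx]. apply cycle_same; auto.
  - apply ce_zero. intros S HS [Hs HSx]. apply E. apply psize_per; auto. apply card_per; auto.
    eapply card_same; eauto. apply cycle_same; auto.
Qed.

Lemma ce_touch F xs n : injective_map F -> 1 <= n ->
  ForallOrdPairs (fun x y => ~ conn F x y) xs ->
  count_exact F (fun S => of_size n S /\ exists x, In x xs /\ S x) (occ (tl F xs) n).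
Proof.
  intros HF Hn. induction xs as [|x0 xs IH]; intros Hfop.
  - apply ce_zero. intros S _ [_ [x [[] _]]].
  - inversion Hfop as [|? ? H1 H2]; subst.
    assert (E : occ (tl F (x0 :: xs)) n =
              (if Nat.eq_dec (psize F x0) n then 1 else 0) + occ (tl F xs) n).
    { unfold tl, occ. cbn [map filter]. destruct (1 <=? psize F x0) eqn:Ep.
      - cbn [count_occ]. destruct (Nat.eq_dec (psize F x0) n); auto.
      - destruct (Nat.eq_dec (psize F x0) n); auto. apply Nat.leb_nle in Ep. lia. }
    rewrite E. apply ce_union with (Q := fun S => S x0).
    + intros S T HST HS; apply HST; auto.
    + eapply ce_ext; [|exact (ce_single F x0 n HF Hn)].
      intros S HS. simpl. split. intros [A B]; split; [split; [auto|exists x0; auto]|auto].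
      intros [[A _] B]; split; auto.
    + eapply ce_ext; [|exact (IH H2)].
      intros S HS. split.
      * intros [A [x [Hx HSx]]]. split; [split; auto|]. exists x; simpl; auto.
        intro HS0. rewrite Forall_forall in H1. apply (H1 x Hx).
        apply conn_sym. apply (cycle_same F S x HS HSx x0). auto.
      * intros [[A [x [[->|Hx] HSx]]] B]. contradiction. split; auto. exists x; auto.
Qed.

Lemma fin_sub F G a b x p q : injective_map F -> injective_map G ->
  (forall y, conn G a y \/ conn G b y -> conn F a y \/ conn F b y) ->
  per F a p -> per F b q -> (conn G a x \/ conn G b x) -> exists r, per G x r.
Proof.
  intros HF HG Hsub Ha Hb Hx. apply (finite_per G HG).
  destruct (per_card F HF a p Ha) as [la [_ [_ Hla]]]. destruct (per_card F HF b q Hb) as [lb [_ [_ Hlb]]].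
  exists (la ++ lb). intros y Hy. apply in_or_app.
  assert (conn G a y \/ conn G b y) as Hy'.
  { destruct Hx; [left|right]; eapply conn_trans; eauto. }
  destruct (Hsub y Hy') as [H|H]; [left; apply Hla|right; apply Hlb]; auto.
Qed.

End Touch.

Section Main.
Context {Omega : Type}.
Implicit Types (x y z : Omega) (S T : Omega -> Prop).
Variables (F G t : Omega -> Omega) (a b : Omega).
Hypothesis HF : injective_map F.
Hypothesis HO : OIC F.
Hypothesis Hab : a <> b.
Hypothesis Hta : t a = b.
Hypothesis Htb : t b = a.
Hypothesis Hto : forall x, x <> a -> x <> b -> t x = x.
Hypothesis HG : forall x, G x = t (F x).

Lemma Hto' : forall x, x <> b -> x <> a -> t x = x.
Proof. intros; apply Hto; auto. Qed.

Lemma HF' x : F x = t (G x).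
Proof. rewrite HG, (t_inv t a b Hta Htb Hto). auto. Qed.

Lemma HGi : injective_map G.
Proof.
  intros x y E. apply HF. rewrite HF', E, <- HF'. auto.
Qed.

Lemma Uin x : conn F a x \/ conn F b x -> conn G a x \/ conn G b x.
Proof.
  intros H. apply NNPP. intro Hn.
  assert (C: is_cycle F (conn G x)).
  { apply (untouched G F t a b Hta Htb Hto HF'). apply cycle_conn.
    intro Ha'. apply Hn; left; apply conn_sym; auto.
    intro Hb'. apply Hn; right; apply conn_sym; auto. }
  pose proof (cycle_same F _ x C (conn_refl G x)) as E.
  apply Hn. destruct H as [H|H]; [left|right]; apply conn_sym.
  apply (proj2 (E a)). apply conn_sym; auto.
  apply (proj2 (E b)). apply conn_sym; auto.
Qed.

Lemma Uout x : conn G a x \/ conn G b x -> conn F a x \/ conn F b x.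
Proof.
  intros H. apply NNPP. intro Hn.
  assert (C: is_cycle G (conn F x)).
  { apply (untouched F G t a b Hta Htb Hto HG). apply cycle_conn.
    intro Ha'. apply Hn; left; apply conn_sym; auto.
    intro Hb'. apply Hn; right; apply conn_sym; auto. }
  pose proof (cycle_same G _ x C (conn_refl F x)) as E.
  apply Hn. destruct H as [H|H]; [left|right]; apply conn_sym.
  apply (proj2 (E a)). apply conn_sym; auto.
  apply (proj2 (E b)). apply conn_sym; auto.
Qed.

Lemma same_out x : ~ (conn F a x \/ conn F b x) -> same_set (conn F x) (conn G x).
Proof.
  intros Hn.
  assert (C: is_cycle G (conn F x)).
  { apply (untouched F G t a b Hta Htb Hto HG). apply cycle_conn.
    intro Ha'. apply Hn; left; apply conn_sym; auto.
    intro Hb'. apply Hn; right; apply conn_sym; auto. }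
  apply (cycle_same G _ x C (conn_refl F x)).
Qed.

Lemma splitF : conn F a b -> ~ conn G a b /\ ((exists k, per G a k) \/ (exists k, per G b k)).
Proof.
  intros [m [n E]].
  destruct (le_lt_dec n m) as [Hle|Hlt].
  - assert (E1: it F (m - n) a = b).
    { replace m with (n + (m - n)) in E by lia. rewrite it_add in E. apply it_inj in E; auto. }
    assert (P: 1 <= m - n /\ it F (m - n) a = b).
    { split; auto. destruct (m - n) eqn:?; simpl in E1; [congruence|lia]. }
    destruct (nat_min (fun k => 1 <= k /\ it F k a = b) (m - n) P) as [k [[Hk1 Hk2] Hk3]].
    destruct (split_core F G t a b HF Hab Hta Htb Hto HG k Hk1 Hk2) as [Hp Hn].
    intros j Hj E'. exact (Hk3 j (proj2 Hj) (conj (proj1 Hj) E')).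
    split; auto. left; eauto.
  - assert (E1: it F (n - m) b = a).
    { replace n with (m + (n - m)) in E by lia. rewrite it_add in E. apply it_inj in E; auto. }
    assert (P: 1 <= n - m /\ it F (n - m) b = a).
    { split; auto. destruct (n - m) eqn:?; simpl in E1; [congruence|lia]. }
    destruct (nat_min (fun k => 1 <= k /\ it F k b = a) (n - m) P) as [k [[Hk1 Hk2] Hk3]].
    destruct (split_core F G t b a HF (not_eq_sym Hab) Htb Hta Hto' HG k Hk1 Hk2) as [Hp Hn].
    intros j Hj E'. exact (Hk3 j (proj2 Hj) (conj (proj1 Hj) E')).
    split. intro C; apply Hn, conn_sym; auto. right; eauto.
Qed.

Lemma mergeF : ~ conn F a b -> conn G a b.
Proof.
  intros Hn. destruct HO as [_ Hc].
  destruct (classic (exists p, per F a p)) as [[p Hp]|Ha].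
  - apply (merge F G t a b Hta Hto HG p Hp Hn).
  - destruct (classic (exists p, per F b p)) as [[p Hp]|Hb].
    + apply conn_sym. apply (merge F G t b a Htb Hto' HG p Hp). intro C; apply Hn, conn_sym; auto.
    + exfalso; apply Hn, Hc; auto.
Qed.

Definition txs H := if xm (conn H a b) then [a] else [a; b].

Lemma fop_txs H : ForallOrdPairs (fun x y => ~ conn H x y) (txs H).
Proof.
  unfold txs. destruct (xm _). repeat constructor. repeat constructor; auto.
Qed.

Lemma txs_touch H S : is_cycle H S -> ((S a \/ S b) <-> exists x, In x (txs H) /\ S x).
Proof.
  intros HS. unfold txs. destruct (xm _) as [C|C].
  - split.
    + intros [Ha|Hb]. exists a; simpl; auto. exists a; split; simpl; auto.
      apply (cycle_same H S b HS Hb). apply conn_sym; auto.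
    + intros [x [[<-|[]] Hx]]; auto.
  - split.
    + intros [Ha|Hb]. exists a; simpl; auto. exists b; simpl; auto.
    + intros [x [[<-|[<-|[]]] Hx]]; auto.
Qed.

Lemma count_trans n k : 1 <= n -> count_exact F (of_size n) k ->
  occ (tl F (txs F)) n <= k /\
  count_exact G (of_size n) (k - occ (tl F (txs F)) n + occ (tl G (txs G)) n).
Proof.
  intros Hn Hk.
  destruct (ce_split F (of_size n) (fun S => S a \/ S b) k) as [k1 [k2 [H1 [H2 Hs]]]]; auto.
  { intros S T E [X|X]; [left|right]; apply E; auto. }
  assert (k1 = occ (tl F (txs F)) n).
  { apply (ce_unique F _ _ _ H1). eapply ce_ext; [|exact (ce_touch F (txs F) n HF Hn (fop_txs F))].
    intros S HS. rewrite (txs_touch F S HS). tauto. }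
  assert (H2' : count_exact G (fun S => of_size n S /\ ~ (S a \/ S b)) k2).
  { apply ce_transfer with F; auto. intros S [_ HS]. split; intro C.
    apply (untouched F G t a b Hta Htb Hto HG); auto; tauto.
    apply (untouched G F t a b Hta Htb Hto HF'); auto; tauto. }
  assert (H3 : count_exact G (fun S => of_size n S /\ (S a \/ S b)) (occ (tl G (txs G)) n)).
  { eapply ce_ext; [|exact (ce_touch G (txs G) n HGi Hn (fop_txs G))].
    intros S HS. rewrite (txs_touch G S HS). tauto. }
  split. lia.
  replace (k - occ (tl F (txs F)) n + occ (tl G (txs G)) n) with (occ (tl G (txs G)) n + k2) by lia.
  apply ce_union with (Q := fun S => S a \/ S b); auto.
  intros S T E [X|X]; [left|right]; apply E; auto.
Qed.

Lemma len1_per H x p : injective_map H -> per H x p -> length (tl H [x]) = 1.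
Proof.
  intros HH Hp. unfold tl. simpl. rewrite (psize_per H x p HH Hp).
  destruct Hp as [Hp _]. destruct p. lia. simpl. auto.
Qed.

Lemma len1_np H x : ~ (exists p, per H x p) -> length (tl H [x]) = 0.
Proof. intros Hn. unfold tl. simpl. rewrite (psize_np H x Hn). auto. Qed.

Lemma len2 H : length (tl H [a; b]) = length (tl H [a]) + length (tl H [b]).
Proof. unfold tl. simpl. destruct (psize H a); destruct (psize H b); auto. Qed.

Lemma parity : Nat.Odd (length (tl F (txs F)) + length (tl G (txs G))).
Proof.
  unfold txs. destruct (xm (conn F a b)) as [C|C]; destruct (xm (conn G a b)) as [D|D].
  - exfalso. apply (proj1 (splitF C)); auto.
  - rewrite len2.
    destruct (classic (exists p, per F a p)) as [[p Hp]|Hnp].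
    + assert (Hpb : per F b p) by (apply (per_conn F HF a b p); auto).
      destruct (fin_sub F G a b a p p HF HGi Uout Hp Hpb (or_introl (conn_refl G a))) as [r Hr].
      destruct (fin_sub F G a b b p p HF HGi Uout Hp Hpb (or_intror (conn_refl G b))) as [r' Hr'].
      rewrite (len1_per F a p HF Hp), (len1_per G a r HGi Hr), (len1_per G b r' HGi Hr').
      exists 1; auto.
    + rewrite (len1_np F a Hnp). destruct (proj2 (splitF C)) as [[k Hk]|[k Hk]].
      * assert (Nb : ~ exists q, per G b q).
        { intros [q Hq]. apply Hnp. apply (fin_sub G F a b a k q HGi HF Uin Hk Hq). left; apply conn_refl. }
        rewrite (len1_per G a k HGi Hk), (len1_np G b Nb). exists 0; auto.
      * assert (Na : ~ exists q, per G a q).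
        { intros [q Hq]. apply Hnp. apply (fin_sub G F a b a q k HGi HF Uin Hq Hk). left; apply conn_refl. }
        rewrite (len1_per G b k HGi Hk), (len1_np G a Na). exists 0; auto.
  - rewrite len2.
    destruct (classic (exists p, per F a p)) as [[p Hp]|Hnp];
    destruct (classic (exists p, per F b p)) as [[q Hq]|Hnq].
    + destruct (fin_sub F G a b a p q HF HGi Uout Hp Hq (or_introl (conn_refl G a))) as [r Hr].
      rewrite (len1_per F a p HF Hp), (len1_per F b q HF Hq), (len1_per G a r HGi Hr). exists 1; auto.
    + assert (Na : ~ exists r, per G a r).
      { intros [r Hr]. apply Hnq. assert (Hrb : per G b r) by (apply (per_conn G HGi a b r); auto).
        apply (fin_sub G F a b b r r HGi HF Uin Hr Hrb). right; apply conn_refl. }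
      rewrite (len1_per F a p HF Hp), (len1_np F b Hnq), (len1_np G a Na). exists 0; auto.
    + assert (Na : ~ exists r, per G a r).
      { intros [r Hr]. apply Hnp. assert (Hrb : per G b r) by (apply (per_conn G HGi a b r); auto).
        apply (fin_sub G F a b a r r HGi HF Uin Hr Hrb). left; apply conn_refl. }
      rewrite (len1_np F a Hnp), (len1_per F b q HF Hq), (len1_np G a Na). exists 0; auto.
    + exfalso. apply C. apply (proj2 HO); auto.
  - exfalso. apply D, mergeF; auto.
Qed.

Lemma surjG : surj G <-> surj F.
Proof.
  split; intros H y.
  - destruct (H (t y)) as [x Hx]. exists x. rewrite HF', Hx. apply (t_inv t a b Hta Htb Hto).
  - destruct (H (t y)) as [x Hx]. exists x. rewrite HG, Hx. apply (t_inv t a b Hta Htb Hto).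
Qed.

Lemma out_case y z : ~ (exists p, per G y p) -> ~ (exists p, per G z p) ->
  ~ (conn G a y \/ conn G b y) -> conn G y z.
Proof.
  intros Hy Hz Uy.
  assert (U : ~ (conn F a y \/ conn F b y)) by (intro C; apply Uy, Uin; auto).
  assert (NPy : ~ exists p, per F y p).
  { intros [p Hp]. apply Hy. apply (finite_per G HGi). destruct (per_finite F HF y p Hp) as [l Hl].
    exists l. intros w Hw. apply Hl. apply (same_out y U w); auto. }
  destruct (classic (conn G a z \/ conn G b z)) as [Uz|Uz].
  - exfalso.
    destruct (classic (exists p, per F a p)) as [[p Pa]|Na];
    [destruct (classic (exists p, per F b p)) as [[q Pb]|Nb]|].
    + apply Hz. apply (fin_sub F G a b z p q HF HGi Uout Pa Pb Uz).
    + apply U. right. apply (proj2 HO); auto.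
    + apply U. left. apply (proj2 HO); auto.
  - assert (U' : ~ (conn F a z \/ conn F b z)) by (intro C; apply Uz, Uin; auto).
    assert (NPz : ~ exists p, per F z p).
    { intros [p Hp]. apply Hz. apply (finite_per G HGi). destruct (per_finite F HF z p Hp) as [l Hl].
      exists l. intros w Hw. apply Hl. apply (same_out z U' w); auto. }
    apply (same_out y U z). apply (proj2 HO); auto.
Qed.

Lemma in_case y z : ~ (exists p, per G y p) -> ~ (exists p, per G z p) ->
  (conn G a y \/ conn G b y) -> (conn G a z \/ conn G b z) -> conn G y z.
Proof.
  intros Hy Hz Uy Uz.
  destruct (classic (conn G a b)) as [D|D].
  - assert (Ay : conn G a y) by (destruct Uy as [U|U]; [exact U|exact (conn_trans G a b y D U)]).
    assert (Az : conn G a z) by (destruct Uz as [U|U]; [exact U|exact (conn_trans G a b z D U)]).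
    exact (conn_trans G y a z (conn_sym G a y Ay) Az).
  - assert (C : conn F a b) by (apply NNPP; intro C; apply D, mergeF; auto).
    destruct (proj2 (splitF C)) as [[k Hk]|[k Hk]].
    + assert (By : conn G b y) by (destruct Uy as [U|U]; auto; exfalso; apply Hy; exists k; apply (per_conn G HGi a y k); auto).
      assert (Bz : conn G b z) by (destruct Uz as [U|U]; auto; exfalso; apply Hz; exists k; apply (per_conn G HGi a z k); auto).
      exact (conn_trans G y b z (conn_sym G b y By) Bz).
    + assert (Ay : conn G a y) by (destruct Uy as [U|U]; auto; exfalso; apply Hy; exists k; apply (per_conn G HGi b y k); auto).
      assert (Az : conn G a z) by (destruct Uz as [U|U]; auto; exfalso; apply Hz; exists k; apply (per_conn G HGi b z k); auto).
      exact (conn_trans G y a z (conn_sym G a y Ay) Az).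
Qed.

Lemma oicG : OIC G.
Proof.
  split.
  - destruct HO as [[x0 Hx0] _].
    destruct (classic (conn F a x0 \/ conn F b x0)) as [U|U].
    + destruct (classic (exists p, per G a p)) as [[p Pa]|Na];
      [destruct (classic (exists p, per G b p)) as [[q Pb]|Nb]|].
      * exfalso. apply Hx0. apply (fin_sub G F a b x0 p q HGi HF Uin Pa Pb U).
      * exists b; auto.
      * exists a; auto.
    + exists x0. intros [p Hp]. apply Hx0. apply (finite_per F HF).
      destruct (per_finite G HGi x0 p Hp) as [l Hl]. exists l. intros y Hy. apply Hl.
      apply (same_out x0 U y). auto.
  - intros y z Hy Hz.
    destruct (classic (conn G a y \/ conn G b y)) as [Uy|Uy].
    + destruct (classic (conn G a z \/ conn G b z)) as [Uz|Uz].
      * apply in_case; auto.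
      * apply conn_sym, out_case; auto.
    + apply out_case; auto.
Qed.

Lemma absorb_tl m : per F a m -> ~ (exists p, per F b p) ->
  tl F (txs F) = [m] /\ tl G (txs G) = [].
Proof.
  intros Hm Hb.
  assert (C : ~ conn F a b) by (intro C; apply Hb; exists m; apply (per_conn F HF a b m); auto).
  assert (D : conn G a b) by (apply mergeF; auto).
  unfold txs. destruct (xm (conn F a b)); [contradiction|]. destruct (xm (conn G a b)); [|contradiction].
  split.
  - unfold tl. simpl. rewrite (psize_per F a m HF Hm), (psize_np F b Hb).
    destruct Hm as [Hm _]. destruct m; [lia|]. auto.
  - assert (Na : ~ exists r, per G a r).
    { intros [r Hr]. apply Hb. assert (Hrb : per G b r) by (apply (per_conn G HGi a b r); auto).
      apply (fin_sub G F a b b r r HGi HF Uin Hr Hrb). right; apply conn_refl. }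
    unfold tl. simpl. rewrite (psize_np G a Na). auto.
Qed.

End Main.

Definition NP {Omega} (f : Omega -> Omega) x := ~ exists p, per f x p.

Section Pair.
Context {Omega : Type}.
Implicit Types (x y z r s : Omega).
Variables (f g : Omega -> Omega).
Hypothesis Hf : injective_map f.
Hypothesis Hg : injective_map g.

Definition Hpair r s x y := exists j k, it f j x = it f k r /\ it g j y = it g k s.

Definition compat r s := (forall d, it f d r = r <-> it g d s = s) /\
  (((forall z, conn f r z -> exists w, f w = z) /\ (forall z, conn g s z -> exists w, g w = z)) \/
   ((~ exists w, f w = r) /\ (~ exists w, g w = s))).

Lemma deep_pre h s : (forall z, conn h s z -> exists w, h w = z) -> forall d, exists y, it h d y = s.
Proof.
  intros H d. induction d. exists s; auto. destruct IHd as [y Hy].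
  destruct (H y) as [w Hw]. exists 0, d; auto.
  exists w. rewrite it_Sr, Hw; auto.
Qed.

Lemma HP_tot r s x : compat r s -> conn f r x -> exists y, Hpair r s x y.
Proof.
  intros [C1 C2] [m [n E]].
  destruct (le_lt_dec n m) as [Hle|Hlt].
  - exists (it g (m - n) s), n, m. split; auto. rewrite <- it_add. f_equal. lia.
  - assert (Er : r = it f (n - m) x).
    { replace n with (m + (n - m)) in E by lia. rewrite it_add in E. apply it_inj in E; auto. }
    destruct C2 as [[C2a C2b]|[C2a C2b]].
    + destruct (deep_pre g s C2b (n - m)) as [y Hy]. exists y, n, m. split; auto.
      replace n with (m + (n - m)) by lia. rewrite it_add, Hy; auto.
    + exfalso. apply C2a. exists (it f (n - m - 1) x). rewrite Er.
      replace (n - m) with (S (n - m - 1)) at 2 by lia. auto.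
Qed.

Lemma HP_conn r s x y : Hpair r s x y -> conn g s y.
Proof. intros [j [k [_ E]]]. exists k, j; auto. Qed.

Lemma HP_step r s x y : Hpair r s x y -> Hpair r s (f x) (g y).
Proof.
  intros [j [k [E1 E2]]]. exists j, (S k). rewrite !it_comm, E1, E2. auto.
Qed.

Lemma HP_fun r s x y y' : compat r s -> Hpair r s x y -> Hpair r s x y' -> y = y'.
Proof.
  intros [C1 _] [j [k [A1 A2]]] [j' [k' [B1 B2]]].
  assert (A1' : it f (k' + j) x = it f (k' + k) r) by (rewrite !it_add, A1; auto).
  assert (B1' : it f (k + j') x = it f (k + k') r) by (rewrite !it_add, B1; auto).
  assert (A2' : it g (k' + j) y = it g (k' + k) s) by (rewrite !it_add, A2; auto).
  assert (B2' : it g (k + j') y' = it g (k + k') s) by (rewrite !it_add, B2; auto).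
  replace (k + k') with (k' + k) in * by lia.
  destruct (Nat.lt_total (k' + j) (k + j')) as [Hl|[He|Hl]].
  - set (P := k' + j) in *. set (d := k + j' - P).
    assert (Ed : k + j' = d + P) by (unfold d; lia). rewrite Ed in B1', B2'.
    rewrite it_add, A1' in B1'. rewrite it_swap in B1'. apply it_inj in B1'; auto.
    apply C1 in B1'.
    assert (it g P y' = it g P y).
    { rewrite A2'. apply (it_inj g Hg d). rewrite it_add in B2'. rewrite B2', it_swap, B1'. auto. }
    apply (it_inj g Hg P); auto.
  - rewrite He in A2'. rewrite <- B2' in A2'. apply it_inj in A2'; auto.
  - set (P := k + j') in *. set (d := k' + j - P).
    assert (Ed : k' + j = d + P) by (unfold d; lia). rewrite Ed in A1', A2'.
    rewrite it_add, B1' in A1'. rewrite it_swap in A1'. apply it_inj in A1'; auto.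
    apply C1 in A1'.
    assert (it g P y = it g P y').
    { rewrite B2'. apply (it_inj g Hg d). rewrite it_add in A2'. rewrite A2', it_swap, A1'. auto. }
    apply (it_inj g Hg P); auto.
Qed.

End Pair.

Lemma np_iter {Omega} (f : Omega -> Omega) r : NP f r -> forall d, it f d r = r <-> d = 0.
Proof.
  intros H d. split; [|intros ->; auto]. intro E. apply NNPP. intro Hd.
  assert (P : 1 <= d /\ it f d r = r) by (split; auto; lia).
  destruct (nat_min (fun d => 1 <= d /\ it f d r = r) d P) as [m [[H1 H2] H3]].
  apply H. exists m. split; auto; split; auto. intros e He E'. apply (H3 e); [lia|split; auto; lia].
Qed.


Lemma fop_nth_eq {Omega} (l : list (Omega -> Prop)) d i j :
  ForallOrdPairs (fun S T => ~ same_set S T) l -> i < length l -> j < length l ->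
  same_set (nth i l d) (nth j l d) -> i = j.
Proof.
  revert i j. induction l as [|S l IH]; intros i j H Hi Hj E; simpl in *. lia.
  inversion H as [|? ? H1 H2]; subst. rewrite Forall_forall in H1.
  destruct i, j; auto.
  - exfalso. apply (H1 (nth j l d)). apply nth_In; lia. auto.
  - exfalso. apply (H1 (nth i l d)). apply nth_In; lia. apply same_sym; auto.
  - f_equal. apply IH; auto; lia.
Qed.

Section Glob.
Context {Omega : Type}.
Implicit Types (x y z r s : Omega) (S T : Omega -> Prop).
Variables (f g : Omega -> Omega).
Hypothesis Hf : injective_map f.
Hypothesis Hg : injective_map g.
Variables (Lf Lg : nat -> list (Omega -> Prop)) (c : nat -> nat).
Definition LP h (L : nat -> list (Omega -> Prop)) := forall n, 1 <= n ->
  length (L n) = c n /\ (forall S, In S (L n) -> is_cycle h S /\ of_size n S) /\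
  ForallOrdPairs (fun S T => ~ same_set S T) (L n) /\
  (forall S, is_cycle h S -> of_size n S -> exists T, In T (L n) /\ same_set S T).
Hypothesis HLf : LP f Lf.
Hypothesis HLg : LP g Lg.
Variables (dflt rf rg : Omega).
Hypothesis Hrf : NP f rf.
Hypothesis Hrg : NP g rg.
Hypothesis Hcomp : ((forall z, exists w, f w = z) /\ (forall z, exists w, g w = z)) \/
   ((~ exists w, f w = rf) /\ (~ exists w, g w = rg)).
Hypothesis Of : OIC f.
Hypothesis Og : OIC g.

Definition rep S : Omega :=
  match xm (exists x, S x) with
  | left H => proj1_sig (constructive_indefinite_description _ H)
  | right _ => dflt end.

Lemma rep_in S : (exists x, S x) -> S (rep S).
Proof.
  intro H. unfold rep. destruct (xm _); [|contradiction].
  destruct (constructive_indefinite_description _ _); auto.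
Qed.

Definition d0 : Omega -> Prop := fun _ => False.

Definition Hrel x y :=
  (exists n i, 1 <= n /\ i < c n /\ nth i (Lf n) d0 x /\ nth i (Lg n) d0 y /\
     Hpair f g (rep (nth i (Lf n) d0)) (rep (nth i (Lg n) d0)) x y) \/
  (NP f x /\ NP g y /\ Hpair f g rf rg x y).

Lemma nth_cyc h L n i : LP h L -> 1 <= n -> i < c n ->
  is_cycle h (nth i (L n) d0) /\ of_size n (nth i (L n) d0).
Proof.
  intros HL Hn Hi. destruct (HL n Hn) as [A [B _]]. apply B. apply nth_In. lia.
Qed.

Lemma nth_per h L n i x : injective_map h -> LP h L -> 1 <= n -> i < c n ->
  nth i (L n) d0 x -> per h x n.
Proof.
  intros Hh HL Hn Hi Hx. destruct (nth_cyc h L n i HL Hn Hi) as [C D].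
  apply card_per; auto. eapply card_same; [|exact D]. apply cycle_same; auto.
Qed.

Lemma compat_fin n i : 1 <= n -> i < c n ->
  compat f g (rep (nth i (Lf n) d0)) (rep (nth i (Lg n) d0)).
Proof.
  intros Hn Hi.
  destruct (nth_cyc f Lf n i HLf Hn Hi) as [Cf _]. destruct (nth_cyc g Lg n i HLg Hn Hi) as [Cg _].
  assert (Pr : per f (rep (nth i (Lf n) d0)) n).
  { apply (nth_per f Lf n i); auto. apply rep_in. apply Cf. }
  assert (Ps : per g (rep (nth i (Lg n) d0)) n).
  { apply (nth_per g Lg n i); auto. apply rep_in. apply Cg. }
  split.
  - intro d. rewrite (per_div f Hf _ n d Pr), (per_div g Hg _ n d Ps). tauto.
  - left. split; intros z Hz. apply (per_image f Hf _ n z Pr Hz). apply (per_image g Hg _ n z Ps Hz).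
Qed.

Lemma compat_inf : compat f g rf rg.
Proof.
  split.
  - intro d. rewrite (np_iter f rf Hrf d), (np_iter g rg Hrg d). tauto.
  - destruct Hcomp as [[A B]|[A B]]; [left|right]; split; auto.
Qed.

Lemma G1 x : exists y, Hrel x y.
Proof.
  destruct (classic (exists p, per f x p)) as [[p Hp]|Hn].
  - assert (Hp1 : 1 <= p) by apply Hp.
    destruct (HLf p Hp1) as [A [B [C D]]].
    destruct (D (conn f x)) as [T [HT HTs]]. apply cycle_conn. apply per_card; auto.
    destruct (In_nth _ _ d0 HT) as [i [Hi Hni]]. rewrite A in Hi.
    set (r := rep (nth i (Lf p) d0)). set (s := rep (nth i (Lg p) d0)).
    destruct (nth_cyc f Lf p i HLf Hp1 Hi) as [Cf _]. destruct (nth_cyc g Lg p i HLg Hp1 Hi) as [Cg _].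
    assert (Hr : nth i (Lf p) d0 r) by (apply rep_in; apply Cf).
    assert (Hs : nth i (Lg p) d0 s) by (apply rep_in; apply Cg).
    assert (Hx : nth i (Lf p) d0 x) by (rewrite Hni; apply HTs; apply conn_refl).
    assert (Hrx : conn f r x) by (apply (cycle_same f _ r Cf Hr); auto).
    destruct (HP_tot f g Hf r s x (compat_fin p i Hp1 Hi) Hrx) as [y Hy].
    exists y. left. exists p, i. repeat split; auto.
    apply (cycle_same g _ s Cg Hs). apply (HP_conn f g r s x y Hy).
  - destruct (HP_tot f g Hf rf rg x compat_inf) as [y Hy]. apply (proj2 Of); auto.
    exists y. right. repeat split; auto. intros [q Hq]. apply Hrg. exists q.
    apply (per_conn g Hg y rg q Hq). apply conn_sym. apply (HP_conn f g rf rg x y Hy).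
Qed.

Lemma G2 x y y' : Hrel x y -> Hrel x y' -> y = y'.
Proof.
  intros [[n [i [Hn [Hi [Hx [Hy H]]]]]]|[Nx [Ny H]]] [[n' [i' [Hn' [Hi' [Hx' [Hy' H']]]]]]|[Nx' [Ny' H']]].
  - destruct (nth_cyc f Lf n i HLf Hn Hi) as [C1 D1].
    destruct (nth_cyc f Lf n' i' HLf Hn' Hi') as [C2 D2].
    assert (E : same_set (nth i (Lf n) d0) (nth i' (Lf n') d0)).
    { apply same_trans with (conn f x). apply cycle_same; auto. apply same_sym, cycle_same; auto. }
    assert (n = n'). { apply (card_unique (nth i (Lf n) d0)); auto. eapply card_same; eauto. apply same_sym; auto. }
    subst n'. destruct (HLf n Hn) as [A [_ [C _]]].
    assert (i = i') by (apply (fop_nth_eq (Lf n) d0 i i'); auto; lia). subst i'.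
    apply (HP_fun f g Hf Hg _ _ x y y' (compat_fin n i Hn Hi)); auto.
  - exfalso. apply Nx'. exists n. apply (nth_per f Lf n i x); auto.
  - exfalso. apply Nx. exists n'. apply (nth_per f Lf n' i' x); auto.
  - apply (HP_fun f g Hf Hg _ _ x y y' compat_inf); auto.
Qed.

Lemma G3 x y : Hrel x y -> Hrel (f x) (g y).
Proof.
  intros [[n [i [Hn [Hi [Hx [Hy H]]]]]]|[Nx [Ny H]]].
  - left. exists n, i. destruct (nth_cyc f Lf n i HLf Hn Hi) as [[_ [Cf _]] _].
    destruct (nth_cyc g Lg n i HLg Hn Hi) as [[_ [Cg _]] _].
    repeat split; auto. apply Cf; auto. apply Cg; auto. apply HP_step; auto.
  - right. split; [|split].
    + intros [p Hp]. apply Nx. exists p. apply (per_conn f Hf (f x) x p Hp). apply conn_sym.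
      exists 1, 0; auto.
    + intros [p Hp]. apply Ny. exists p. apply (per_conn g Hg (g y) y p Hp). apply conn_sym.
      exists 1, 0; auto.
    + apply HP_step; auto.
Qed.

End Glob.

Lemma Hrel_swap {Omega} (f g : Omega -> Omega) Lf Lg c dflt rf rg x y :
  Hrel f g Lf Lg c dflt rf rg x y -> Hrel g f Lg Lf c dflt rg rf y x.
Proof.
  intros [[n [i [Hn [Hi [Hx [Hy [j [k [H1 H2]]]]]]]]]|[Nx [Ny [j [k [H1 H2]]]]]].
  - left. exists n, i. repeat split; auto. exists j, k; auto.
  - right. repeat split; auto. exists j, k; auto.
Qed.

Theorem conj_exists {Omega} (f g : Omega -> Omega) (Hf : injective_map f) (Hg : injective_map g)
  Lf Lg c (HLf : LP c f Lf) (HLg : LP c g Lg) (dflt rf rg : Omega) (Hrf : NP f rf) (Hrg : NP g rg)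
  (Hcomp : ((forall z, exists w, f w = z) /\ (forall z, exists w, g w = z)) \/
   ((~ exists w, f w = rf) /\ (~ exists w, g w = rg)))
  (Of : OIC f) (Og : OIC g) :
  exists phi psi, (forall x, psi (phi x) = x) /\ (forall y, phi (psi y) = y) /\
    forall x, phi (f x) = g (phi x).
Proof.
  assert (Hcomp' : ((forall z, exists w, g w = z) /\ (forall z, exists w, f w = z)) \/
   ((~ exists w, g w = rg) /\ (~ exists w, f w = rf))) by tauto.
  pose proof (G1 f g Hf Hg Lf Lg c HLf HLg dflt rf rg Hrf Hrg Hcomp Of) as E1.
  pose proof (G1 g f Hg Hf Lg Lf c HLg HLf dflt rg rf Hrg Hrf Hcomp' Og) as E1'.
  pose proof (G2 f g Hf Hg Lf Lg c HLf HLg dflt rf rg Hrf Hrg Hcomp) as E2.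
  pose proof (G2 g f Hg Hf Lg Lf c HLg HLf dflt rg rf Hrg Hrf Hcomp') as E2'.
  pose proof (G3 f g Hf Hg Lf Lg c HLf HLg dflt rf rg) as E3.
  set (phi := fun x => proj1_sig (constructive_indefinite_description _ (E1 x))).
  set (psi := fun y => proj1_sig (constructive_indefinite_description _ (E1' y))).
  assert (Pphi : forall x, Hrel f g Lf Lg c dflt rf rg x (phi x)).
  { intro x. unfold phi. destruct (constructive_indefinite_description _ _); auto. }
  assert (Ppsi : forall y, Hrel g f Lg Lf c dflt rg rf y (psi y)).
  { intro y. unfold psi. destruct (constructive_indefinite_description _ _); auto. }
  exists phi, psi. split; [|split].
  - intro x. apply (E2' (phi x)). apply Ppsi. apply Hrel_swap. apply Pphi.
  - intro y. apply (E2 (psi y)). apply Pphi. apply Hrel_swap. apply Ppsi.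
  - intro x. apply (E2 (f x)). apply Pphi. apply E3. apply Pphi.
Qed.

Lemma sum_ext (d e : nat -> Z) N : (forall n, 1 <= n <= N -> d n = e n) -> sum_from1 d N = sum_from1 e N.
Proof. induction N; intros H; simpl; auto. rewrite IHN; [rewrite H; [auto|lia]|intros; apply H; lia]. Qed.

Lemma sum_add (d e : nat -> Z) N : sum_from1 (fun n => (d n + e n)%Z) N = (sum_from1 d N + sum_from1 e N)%Z.
Proof. induction N; simpl; auto. rewrite IHN; lia. Qed.

Lemma sum_opp (d : nat -> Z) N : sum_from1 (fun n => (- d n)%Z) N = (- sum_from1 d N)%Z.
Proof. induction N; simpl; auto. rewrite IHN; lia. Qed.

Lemma sum_zero (d : nat -> Z) N : (forall n, 1 <= n <= N -> d n = 0%Z) -> sum_from1 d N = 0%Z.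
Proof. induction N; intros H; simpl; auto. rewrite IHN; [rewrite H; [auto|lia]|intros; apply H; lia]. Qed.

Lemma sum_ext_len (d : nat -> Z) N N' : N <= N' -> (forall n, N < n <= N' -> d n = 0%Z) ->
  sum_from1 d N' = sum_from1 d N.
Proof.
  intros Hle H. induction N'. replace N with 0 by lia; auto.
  destruct (Nat.eq_dec N (S N')) as [->|Hne]; auto.
  simpl. rewrite IHN', H; try lia. intros; apply H; lia.
Qed.

Lemma sum_ind1 x N : 1 <= x <= N -> sum_from1 (fun n => if Nat.eq_dec x n then 1%Z else 0%Z) N = 1%Z.
Proof.
  induction N; intros H. lia. simpl. destruct (Nat.eq_dec x (S N)) as [E|E].
  - rewrite sum_zero. lia. intros n Hn. destruct (Nat.eq_dec x n); auto; lia.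
  - rewrite IHN; lia.
Qed.

Lemma sum_occ (l : list nat) N : (forall p, In p l -> 1 <= p <= N) ->
  sum_from1 (fun n => Z.of_nat (occ l n)) N = Z.of_nat (length l).
Proof.
  induction l as [|x l IH]; intros H; simpl.
  - apply sum_zero. auto.
  - rewrite (sum_ext _ (fun n => ((if Nat.eq_dec x n then 1 else 0) + Z.of_nat (occ l n))%Z)).
    rewrite sum_add, sum_ind1, IH. lia. intros; apply H; simpl; auto. apply H; simpl; auto.
    intros n _. unfold occ. simpl. destruct (Nat.eq_dec x n); lia.
Qed.

Lemma occ_big (l : list nat) n : (forall p, In p l -> p < n) -> occ l n = 0.
Proof.
  intros H. unfold occ. apply count_occ_not_In. intro Hn. specialize (H n Hn). lia.
Qed.

Fixpoint natsum (c : nat -> nat) N : nat := match N with 0 => 0 | S m => natsum c m + c (S m) end.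

Lemma sum_nat (c1 c2 : nat -> nat) N :
  sum_from1 (fun n => (Z.of_nat (c1 n) - Z.of_nat (c2 n))%Z) N = (Z.of_nat (natsum c1 N) - Z.of_nat (natsum c2 N))%Z.
Proof. induction N; simpl; auto. rewrite IHN. lia. Qed.

Lemma natsum_ext (c1 c2 : nat -> nat) N : (forall n, 1 <= n <= N -> c1 n = c2 n) -> natsum c1 N = natsum c2 N.
Proof. induction N; intros H; simpl; auto. rewrite IHN; [rewrite H; [auto|lia]|intros; apply H; lia]. Qed.

Section Cnt.
Context {Omega : Type}.
Implicit Types (F G t : Omega -> Omega) (x y a b : Omega).

Definition cnt F n : nat :=
  match xm (count_finite F (of_size n)) with
  | left H => proj1_sig (constructive_indefinite_description _ H)
  | right _ => 0 end.

Lemma cnt_spec F n : count_finite F (of_size n) -> count_exact F (of_size n) (cnt F n).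
Proof.
  intro H. unfold cnt. destruct (xm _); [|contradiction].
  destruct (constructive_indefinite_description _ _); auto.
Qed.

Lemma cnt_eq F n k : count_exact F (of_size n) k -> cnt F n = k.
Proof. intro H. apply (ce_unique F (of_size n)). apply cnt_spec. exists k; auto. auto. Qed.

Lemma ce_size0 F : count_exact F (of_size 0) 0.
Proof.
  apply ce_zero. intros S [[x Hx] _] [l [_ [Hl H]]]. destruct l; [|discriminate].
  apply (H x); auto.
Qed.

Definition hyps F := injective_map F /\ OIC F /\ forall n, count_finite F (of_size n).

Lemma hyps_of F : injective_map F -> one_infinite_cycle F ->
  (forall n, 1 <= n -> count_finite F (of_size n)) -> hyps F.
Proof.
  intros H1 H2 H3. split; auto. split. apply oic_iff; auto.
  intro n. destruct n. exists 0; apply ce_size0. apply H3; lia.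
Qed.

Lemma step F t a b : hyps F -> a <> b -> t a = b -> t b = a ->
  (forall x, x <> a -> x <> b -> t x = x) ->
  hyps (fun x => t (F x)) /\ (surj (fun x => t (F x)) <-> surj F) /\
  (forall x, F x = t (t (F x))) /\
  Nat.Odd (length (tl F (txs a b F)) + length (tl (fun x => t (F x)) (txs a b (fun x => t (F x))))) /\
  (forall n, 1 <= n -> occ (tl F (txs a b F)) n <= cnt F n /\
     cnt (fun x => t (F x)) n = cnt F n - occ (tl F (txs a b F)) n +
        occ (tl (fun x => t (F x)) (txs a b (fun x => t (F x)))) n).
Proof.
  intros [HF [HO Hc]] Hab Hta Htb Hto.
  set (G := fun x => t (F x)).
  assert (HG : forall x, G x = t (F x)) by reflexivity.
  assert (CT : forall n, 1 <= n -> occ (tl F (txs a b F)) n <= cnt F n /\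
     count_exact G (of_size n) (cnt F n - occ (tl F (txs a b F)) n + occ (tl G (txs a b G)) n)).
  { intros n Hn. apply (count_trans F G t a b HF Hta Htb Hto HG n); auto. apply cnt_spec; auto. }
  split; [|split; [|split; [|split]]].
  - split. apply (HGi F G t a b HF Hta Htb Hto HG). split. apply (oicG F G t a b HF HO Hab Hta Htb Hto HG).
    intro n. destruct n. exists 0; apply ce_size0. eexists. apply (CT (S n)). lia.
  - apply (surjG F G t a b HF Hta Htb Hto HG).
  - intro x. symmetry. apply (t_inv t a b Hta Htb Hto).
  - apply (parity F G t a b HF HO Hab Hta Htb Hto HG).
  - intros n Hn. destruct (CT n Hn) as [A B]. split; auto. apply cnt_eq; auto.
Qed.

Lemma tl_pos F xs p : In p (tl F xs) -> 1 <= p.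
Proof. unfold tl. intro H. apply filter_In in H. destruct H as [_ H]. apply Nat.leb_le; auto. Qed.

Definition zd (F G : Omega -> Omega) n : Z := (Z.of_nat (cnt F n) - Z.of_nat (cnt G n))%Z.

Lemma chain ts : (forall t, In t ts -> is_transposition t) ->
  forall F, hyps F -> hyps (fun x => compose_lr ts (F x)) /\
   (surj (fun x => compose_lr ts (F x)) <-> surj F) /\
   exists M, (forall n, M < n -> cnt (fun x => compose_lr ts (F x)) n = cnt F n) /\
     exists z, (sum_from1 (zd (fun x => compose_lr ts (F x)) F) M + Z.of_nat (length ts) = 2 * z)%Z.
Proof.
  induction ts as [|t ts IH]; intros Hts F HF.
  - simpl. split; auto. split. tauto. exists 0. split; auto. exists 0%Z. simpl. lia.
  - destruct (Hts t (or_introl eq_refl)) as [a [b [Hab [Hta [Htb Hto]]]]].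
    destruct (step F t a b HF Hab Hta Htb Hto) as [H1 [H2 [H3 [H4 H5]]]].
    set (G := fun x => t (F x)) in *.
    destruct (IH (fun t H => Hts t (or_intror H)) G H1) as [K1 [K2 [M2 [K3 [z2 K4]]]]].
    change (fun x => compose_lr (t :: ts) (F x)) with (fun x => compose_lr ts (G x)).
    set (F2 := fun x => compose_lr ts (G x)) in *.
    split; auto. split. tauto.
    set (l1 := tl F (txs a b F)) in *. set (l2 := tl G (txs a b G)) in *.
    set (M1 := list_max (l1 ++ l2)).
    assert (Hl : forall p, In p (l1 ++ l2) -> 1 <= p <= M1).
    { intros p Hp. split. apply in_app_or in Hp. destruct Hp; eapply tl_pos; eauto.
      pose proof (proj1 (list_max_le (l1 ++ l2) M1) (le_n _)) as HM.
      rewrite Forall_forall in HM. apply HM; auto. }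
    assert (Hl1 : forall p, In p l1 -> 1 <= p <= M1) by (intros; apply Hl; apply in_or_app; auto).
    assert (Hl2 : forall p, In p l2 -> 1 <= p <= M1) by (intros; apply Hl; apply in_or_app; auto).
    exists (max M1 M2). split.
    + intros n Hn. rewrite K3 by lia. destruct (H5 n) as [_ E]. lia. rewrite E.
      rewrite (occ_big l1 n), (occ_big l2 n). lia.
      intros p Hp; specialize (Hl2 p Hp); lia. intros p Hp; specialize (Hl1 p Hp); lia.
    + destruct H4 as [w Hw].
      assert (E1 : sum_from1 (zd F2 F) (max M1 M2) =
                   (sum_from1 (zd F2 G) (max M1 M2) + sum_from1 (zd G F) (max M1 M2))%Z).
      { rewrite <- sum_add. apply sum_ext. intros n _. unfold zd. lia. }
      assert (E2 : sum_from1 (zd F2 G) (max M1 M2) = sum_from1 (zd F2 G) M2).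
      { apply sum_ext_len. lia. intros n Hn. unfold zd. rewrite K3 by lia. lia. }
      assert (E3 : sum_from1 (zd G F) (max M1 M2) =
         (sum_from1 (fun n => Z.of_nat (occ l2 n)) (max M1 M2) - sum_from1 (fun n => Z.of_nat (occ l1 n)) (max M1 M2))%Z).
      { rewrite <- (sum_ext (fun n => (Z.of_nat (occ l2 n) + - Z.of_nat (occ l1 n))%Z)).
        rewrite sum_add, sum_opp. lia.
        intros n Hn. unfold zd. destruct (H5 n) as [A B]. lia. rewrite B. lia. }
      rewrite sum_occ in E3 by (intros p Hp; specialize (Hl2 p Hp); lia).
      rewrite sum_occ in E3 by (intros p Hp; specialize (Hl1 p Hp); lia).
      exists (z2 + Z.of_nat w + 1 - Z.of_nat (length l1))%Z. change (length (t :: ts)) with (S (length ts)).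
      rewrite E1, E2, E3. lia.
Qed.

End Cnt.

Section AE.
Context {Omega : Type}.
Implicit Types (f g F G t : Omega -> Omega) (x y a b : Omega).

Lemma Cn_eq_iff f g n : hyps f -> hyps g -> (Cn_eq f g n <-> cnt f n = cnt g n).
Proof.
  intros [_ [_ Hf]] [_ [_ Hg]]. unfold Cn_eq, count_eq. split.
  - intro H. symmetry. apply cnt_eq. apply H. apply cnt_spec; auto.
  - intros E k. split; intro Hk.
    + rewrite <- (cnt_eq f n k Hk), E. apply cnt_spec; auto.
    + rewrite <- (cnt_eq g n k Hk), <- E. apply cnt_spec; auto.
Qed.

Lemma ceq_of f g P Q k : count_exact f P k -> count_exact g Q k -> count_eq f P g Q.
Proof.
  intros H1 H2 j. split; intro H.
  rewrite (ce_unique f P j k H H1); auto. rewrite (ce_unique g Q j k H H2); auto.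
Qed.

Lemma ceq_to f g P Q j k : count_eq f P g Q -> count_exact f P j -> count_exact g Q k -> j = k.
Proof. intros H H1 H2. apply (ce_unique g Q j k); auto. apply H; auto. Qed.

Lemma open_fwd f g : hyps f -> hyps g -> (surj f <-> surj g) ->
  count_eq f (open_cycle f) g (open_cycle g) /\ count_eq f (forward_cycle f) g (forward_cycle g).
Proof.
  intros [Hf [Of _]] [Hg [Og _]] E.
  destruct (surj_counts f Hf Of) as [Sf NSf]. destruct (surj_counts g Hg Og) as [Sg NSg].
  destruct (classic (surj f)) as [H|H].
  - destruct (Sf H) as [A B]. destruct (Sg (proj1 E H)) as [C D].
    split; eapply ceq_of; eauto.
  - destruct (NSf H) as [A B]. destruct (NSg (fun X => H (proj2 E X))) as [C D].
    split; eapply ceq_of; eauto.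
Qed.

Lemma surj_of_open f g : hyps f -> hyps g ->
  count_eq f (open_cycle f) g (open_cycle g) -> (surj f <-> surj g).
Proof.
  intros [Hf [Of _]] [Hg [Og _]] E.
  destruct (surj_counts f Hf Of) as [Sf NSf]. destruct (surj_counts g Hg Og) as [Sg NSg].
  split; intro H; apply NNPP; intro H'.
  - pose proof (ceq_to _ _ _ _ _ _ E (proj1 (Sf H)) (proj1 (NSg H'))). discriminate.
  - pose proof (ceq_to _ _ _ _ _ _ E (proj1 (NSf H')) (proj1 (Sg H))). discriminate.
Qed.

Lemma AE_to f g : hyps f -> hyps g -> approx_even f g ->
  (surj f <-> surj g) /\ exists N, (forall n, N < n -> cnt f n = cnt g n) /\
    exists z, sum_from1 (zd f g) N = (2 * z)%Z.
Proof.
  intros Hf Hg [[Ho _] [N [d [H1 [H2 [z H3]]]]]]. split. apply surj_of_open; auto.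
  exists N. split. intros n Hn. apply Cn_eq_iff; auto.
  exists z. rewrite <- H3. apply sum_ext. intros n Hn.
  destruct (H2 n Hn) as [[C ->]|[a' [b' [A [B ->]]]]].
  - unfold zd. rewrite (proj1 (Cn_eq_iff f g n Hf Hg) C). lia.
  - unfold zd. rewrite (cnt_eq f n a' A), (cnt_eq g n b' B). auto.
Qed.

Lemma AE_from f g : hyps f -> hyps g -> (surj f <-> surj g) ->
  (exists N, (forall n, N < n -> cnt f n = cnt g n) /\ exists z, sum_from1 (zd f g) N = (2 * z)%Z) ->
  approx_even f g.
Proof.
  intros Hf Hg E [N [H1 [z H2]]].
  destruct (open_fwd f g Hf Hg E) as [A B].
  split; [split; [|split; [|split]]|]; auto.
  - exists N. intros n Hn. apply Cn_eq_iff; auto.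
  - intros n _ _. split. apply Hf. apply Hg.
  - exists N, (zd f g). split; [|split].
    + intros n Hn. apply Cn_eq_iff; auto.
    + intros n Hn. right. exists (cnt f n), (cnt g n). split; [|split]; auto.
      apply cnt_spec, Hf. apply cnt_spec, Hg.
    + exists z; auto.
Qed.

Lemma conj_inv f F phi psi : (forall x, psi (phi x) = x) -> (forall y, phi (psi y) = y) ->
  (forall x, phi (f x) = F (phi x)) -> hyps F ->
  (forall n, cnt f n = cnt F n) /\ (surj f <-> surj F).
Proof.
  intros H1 H2 H3 HF. split.
  - intro n. apply cnt_eq. apply (proj2 (conj_ce_iff f F phi psi n (cnt F n) H1 H2 H3)).
    apply cnt_spec, HF.
  - split; intros S y.
    + destruct (S (psi y)) as [x Hx]. exists (phi x). rewrite <- H3, Hx; auto.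
    + destruct (S (phi y)) as [x Hx]. exists (psi x).
      apply (f_equal psi) in Hx. rewrite H1 in Hx. rewrite <- Hx.
      rewrite <- (H1 (f (psi x))), H3, H2. auto.
Qed.

Lemma compose_app (l1 l2 : list (Omega -> Omega)) x :
  compose_lr (l1 ++ l2) x = compose_lr l2 (compose_lr l1 x).
Proof. revert x; induction l1; intros; simpl; auto. Qed.

Lemma transp_inv t x : is_transposition t -> t (t x) = x.
Proof. intros [a [b [Hab [Hta [Htb Hto]]]]]. apply (t_inv t a b Hta Htb Hto). Qed.

Lemma compose_rev (l : list (Omega -> Omega)) x : (forall t, In t l -> is_transposition t) ->
  compose_lr (rev l) (compose_lr l x) = x.
Proof.
  revert x; induction l as [|t l IH]; intros x H; simpl; auto.
  rewrite compose_app. simpl. rewrite IH. apply transp_inv. apply H; simpl; auto.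
  intros; apply H; simpl; auto.
Qed.

Lemma compose_conj (l : list (Omega -> Omega)) phi psi z : (forall x, psi (phi x) = x) ->
  compose_lr (map (fun t y => phi (t (psi y))) l) (phi z) = phi (compose_lr l z).
Proof. intros H. revert z; induction l; intros; simpl; auto. rewrite H, IHl; auto. Qed.

Lemma conj_transp t phi psi : (forall x, psi (phi x) = x) -> (forall y, phi (psi y) = y) ->
  is_transposition t -> is_transposition (fun y => phi (t (psi y))).
Proof.
  intros H1 H2 [a [b [Hab [Hta [Htb Hto]]]]]. exists (phi a), (phi b). split; [|split; [|split]].
  - intro E. apply Hab. rewrite <- (H1 a), E, H1; auto.
  - rewrite H1, Hta; auto.
  - rewrite H1, Htb; auto.
  - intros x Ha Hb. rewrite Hto. auto. intro E; apply Ha; rewrite <- E, H2; auto.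
    intro E; apply Hb; rewrite <- E, H2; auto.
Qed.

Definition swap a b x := if xm (x = a) then b else if xm (x = b) then a else x.

Lemma swap_transp a b : a <> b -> is_transposition (swap a b).
Proof.
  intros Hab. exists a, b. unfold swap. split; [auto|split; [|split]].
  - destruct (xm (a = a)); tauto.
  - destruct (xm (b = a)). subst; tauto. destruct (xm (b = b)); tauto.
  - intros x Ha Hb. destruct (xm (x = a)); [tauto|]. destruct (xm (x = b)); tauto.
Qed.

Lemma natsum_zero c N : natsum c N = 0 -> forall n, 1 <= n <= N -> c n = 0.
Proof.
  induction N; intros H n Hn. lia. simpl in H.
  destruct (Nat.eq_dec n (S N)) as [->|Hne]. lia. apply IHN; lia.
Qed.

Lemma natsum_pos c N : natsum c N > 0 -> exists n, 1 <= n <= N /\ c n > 0.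
Proof.
  induction N; intros H; simpl in H. lia.
  destruct (Nat.eq_dec (c (S N)) 0). destruct IHN as [n [A B]]. lia. exists n; split; auto; lia.
  exists (S N); split; lia.
Qed.

Lemma natsum_dec c c' n N : 1 <= n <= N ->
  (forall k, 1 <= k <= N -> c k = c' k + (if Nat.eq_dec k n then 1 else 0)) ->
  natsum c N = natsum c' N + 1.
Proof.
  induction N; intros Hn H. lia. simpl.
  destruct (Nat.eq_dec n (S N)) as [->|Hne].
  - rewrite (natsum_ext c c'). rewrite H by lia. destruct (Nat.eq_dec (S N) (S N)); [lia|tauto].
    intros k Hk. rewrite H by lia. destruct (Nat.eq_dec k (S N)); lia.
  - rewrite IHN; [|lia|intros; apply H; lia]. rewrite H by lia.
    destruct (Nat.eq_dec (S N) n); lia.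
Qed.

Lemma absorb N : forall m F, hyps F -> natsum (cnt F) N = m ->
  exists ts F2, (forall t, In t ts -> is_transposition t) /\
    (forall x, F x = compose_lr ts (F2 x)) /\ hyps F2 /\ (surj F2 <-> surj F) /\
    (forall n, 1 <= n <= N -> cnt F2 n = 0) /\ (forall n, N < n -> cnt F2 n = cnt F n) /\
    length ts = m.
Proof.
  induction m as [|m IH]; intros F HF Hm.
  - exists [], F. split; [intros t []|split; [intro; auto|split; [auto|split; [tauto|split; [intros n Hn; apply (natsum_zero _ N Hm); auto|split; auto]]]]].
  - destruct (natsum_pos (cnt F) N) as [n [Hn Hc]]. lia.
    destruct HF as [HFi [HO Hfin]] eqn:HFe.
    destruct (cnt_spec F n (Hfin n)) as [L [HL1 [HL2 [HL3 HL4]]]].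
    destruct L as [|S L]. simpl in HL1; lia.
    destruct (HL2 S (or_introl eq_refl)) as [HS Hsz].
    destruct HS as [[a Ha] HS'] eqn:HSe.
    assert (Pa : per F a n).
    { apply card_per; auto. eapply card_same; [|exact Hsz]. apply cycle_same; auto. }
    destruct HO as [[b Hb] Hconn] eqn:HOe.
    assert (Hab : a <> b) by (intro E; apply Hb; exists n; subst; auto).
    assert (Ta : swap a b a = b) by (unfold swap; destruct (xm (a = a)); tauto).
    assert (Tb : swap a b b = a).
    { unfold swap. destruct (xm (b = a)). subst; tauto. destruct (xm (b = b)); tauto. }
    assert (To : forall x, x <> a -> x <> b -> swap a b x = x).
    { intros x Hxa Hxb. unfold swap. destruct (xm (x = a)); [tauto|]. destruct (xm (x = b)); tauto. }
    set (t := swap a b) in *.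
    destruct (step F t a b HF Hab Ta Tb To) as [H1 [H2 [H3 [_ H5]]]].
    set (G := fun x => t (F x)) in *.
    destruct (absorb_tl F G t a b HFi HO Ta Tb To (fun x => eq_refl) n Pa Hb) as [E1 E2].
    rewrite E1, E2 in H5.
    assert (CG : forall k, 1 <= k -> cnt F k = cnt G k + (if Nat.eq_dec k n then 1 else 0)).
    { intros k Hk. destruct (H5 k Hk) as [A B]. rewrite B. unfold occ in *. simpl in *.
      destruct (Nat.eq_dec n k); destruct (Nat.eq_dec k n); try (subst k); lia. }
    assert (HmG : natsum (cnt G) N = m).
    { rewrite (natsum_dec (cnt F) (cnt G) n N Hn) in Hm. lia. intros k Hk; apply CG; lia. }
    destruct (IH G H1 HmG) as [ts [F2 [K1 [K2 [K3 [K4 [K5 [K6 K7]]]]]]]].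
    exists (ts ++ [t]), F2. split; [|split; [|split; [|split; [|split; [|split]]]]]; auto.
    + intros t' Ht'. apply in_app_or in Ht'. destruct Ht' as [Ht'|[<-|[]]]; auto. apply swap_transp; auto.
    + intro x. rewrite compose_app. simpl. rewrite <- K2. apply H3.
    + tauto.
    + intros k Hk. rewrite K6 by auto. rewrite CG by lia. destruct (Nat.eq_dec k n); lia.
    + rewrite length_app, K7. simpl. lia.
Qed.

End AE.

Theorem mainTheorem18 (Omega : Type) (HOmega : countably_infinite Omega)
  (f g : Omega -> Omega) (Hf : injective_map f) (Hg : injective_map g)
  (Hf1 : one_infinite_cycle f) (Hg1 : one_infinite_cycle g)
  (Hfc : forall n, 1 <= n -> count_finite f (of_size n))
  (Hgc : forall n, 1 <= n -> count_finite g (of_size n)) :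
  approx_even f g <->
  exists h hinv h1 h2 : Omega -> Omega,
    is_sym h hinv /\ is_alt h1 /\ is_alt h2 /\
    (* f = h h1 g h2 h^{-1}, maps acting on the right *)
    forall x, f x = hinv (h2 (g (h1 (h x)))).
Proof.
  assert (HF : hyps f) by (apply hyps_of; auto).
  assert (HG : hyps g) by (apply hyps_of; auto).
  split.
  - intro AE. destruct (AE_to f g HF HG AE) as [ES [N [HN [z Hz]]]].
    destruct (absorb N (natsum (cnt f) N) f HF eq_refl) as [tsf [f2 [A1 [A2 [A3 [A4 [A5 [A6 A7]]]]]]]].
    destruct (absorb N (natsum (cnt g) N) g HG eq_refl) as [tsg [g2 [B1 [B2 [B3 [B4 [B5 [B6 B7]]]]]]]].
    assert (Ecnt : forall n, 1 <= n -> cnt f2 n = cnt g2 n).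
    { intros n Hn. destruct (le_lt_dec n N). rewrite A5, B5; auto.
      rewrite A6, B6, HN; auto. }
    assert (ES2 : surj f2 <-> surj g2) by tauto.
    destruct A3 as [Hf2 [Of2 Cf2]]. destruct B3 as [Hg2 [Og2 Cg2]].
    set (Lf := fun n => proj1_sig (constructive_indefinite_description _ (cnt_spec f2 n (Cf2 n)))).
    set (Lg := fun n => proj1_sig (constructive_indefinite_description _ (cnt_spec g2 n (Cg2 n)))).
    assert (HLf : LP (cnt f2) f2 Lf).
    { intros n Hn. unfold Lf. destruct (constructive_indefinite_description _ _) as [L HL]. simpl. exact HL. }
    assert (HLg : LP (cnt f2) g2 Lg).
    { intros n Hn. unfold Lg. destruct (constructive_indefinite_description _ _) as [L [HL1 HL]]. simpl.
      split; auto. rewrite HL1, Ecnt; auto. }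
    assert (Hr : exists rf rg, NP f2 rf /\ NP g2 rg /\
      (((forall z, exists w, f2 w = z) /\ (forall z, exists w, g2 w = z)) \/
       ((~ exists w, f2 w = rf) /\ (~ exists w, g2 w = rg)))).
    { destruct (classic (surj f2)) as [S|S].
      - destruct Of2 as [[rf Hrf] _]. destruct Og2 as [[rg Hrg] _].
        exists rf, rg. split; auto. split; auto. left. split; auto. apply ES2; auto.
      - assert (S' : ~ surj g2) by tauto.
        assert (Ef : exists rf, ~ exists w, f2 w = rf).
        { apply NNPP. intro H. apply S. intro y. apply NNPP. intro Hy. apply H. exists y; auto. }
        assert (Eg : exists rg, ~ exists w, g2 w = rg).
        { apply NNPP. intro H. apply S'. intro y. apply NNPP. intro Hy. apply H. exists y; auto. }
        destruct Ef as [rf Hrf]. destruct Eg as [rg Hrg]. exists rf, rg. split; [|split].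
        + intros [p Hp]. apply Hrf. apply (per_image f2 Hf2 rf p rf Hp (conn_refl _ _)).
        + intros [p Hp]. apply Hrg. apply (per_image g2 Hg2 rg p rg Hp (conn_refl _ _)).
        + right; auto. }
    destruct Hr as [rf [rg [Hrf [Hrg Hcomp]]]].
    destruct (conj_exists f2 g2 Hf2 Hg2 Lf Lg (cnt f2) HLf HLg rf rf rg Hrf Hrg Hcomp Of2 Og2)
      as [phi [psi [P1 [P2 P3]]]].
    set (M := map (fun t y => phi (t (psi y))) tsf).
    exists phi, psi, (fun x => x), (fun y => compose_lr (rev tsg ++ M) y).
    split; [split; auto|split; [|split]].
    + exists []. split. exists 0; auto. split. intros t []. auto.
    + exists (rev tsg ++ M). split; [|split; [|auto]].
      * unfold M. rewrite length_app, length_rev, length_map, A7, B7.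
        unfold zd in Hz. rewrite sum_nat in Hz. exists (Z.to_nat (z + Z.of_nat (natsum (cnt g) N))). lia.
      * intros t Ht. apply in_app_or in Ht. destruct Ht as [Ht|Ht].
        apply B1. apply in_rev; auto.
        unfold M in Ht. apply in_map_iff in Ht. destruct Ht as [t0 [<- Ht0]].
        apply conj_transp; auto.
    + intro x. rewrite compose_app, B2, <- P3, compose_rev by auto.
      unfold M. rewrite compose_conj by auto. rewrite <- A2, P1. auto.
  - intros [h [hinv [h1 [h2 [[Hs1 Hs2] [[ts1 [E1 [T1 Q1]]] [[ts2 [E2 [T2 Q2]]] Heq]]]]]]].
    set (ts := ts2 ++ ts1).
    assert (T : forall t, In t ts -> is_transposition t).
    { intros t Ht. apply in_app_or in Ht. destruct Ht; auto. }
    destruct (chain ts T g HG) as [C1 [C2 [M [C3 [z C4]]]]].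
    set (F := fun x => compose_lr ts (g x)) in *.
    set (phi := fun x => h1 (h x)). set (psi := fun y => hinv (compose_lr (rev ts1) y)).
    assert (R1 : forall x, psi (phi x) = x).
    { intro x. unfold psi, phi. rewrite Q1, compose_rev; auto. }
    assert (R2 : forall y, phi (psi y) = y).
    { intro y. unfold psi, phi. rewrite Hs2, Q1.
      rewrite <- (rev_involutive ts1) at 1. apply compose_rev.
      intros t Ht. apply T1. apply in_rev; auto. }
    assert (R3 : forall x, phi (f x) = F (phi x)).
    { intro x. unfold phi, F, ts. rewrite Heq, Hs2, Q1, Q2, compose_app. auto. }
    destruct (conj_inv f F phi psi R1 R2 R3 C1) as [D1 D2].
    apply AE_from; auto. tauto.
    exists M. split.
    + intros n Hn. rewrite D1, C3; auto.
    + destruct E1 as [k1 Hk1]. destruct E2 as [k2 Hk2].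
      exists (z - Z.of_nat k1 - Z.of_nat k2)%Z.
      rewrite (sum_ext (zd f g) (zd F g)). unfold ts in C4. rewrite length_app in C4. lia.
      intros n _. unfold zd. rewrite D1. auto.
Qed.
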